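(* Let $L>0$ and let $f:\mathbb{R}\times\mathbb{R}\to\mathbb{R}$ be continuous, $L$-periodic in the first argument, and continuously differentiable in the second argument. Let $\alpha,\beta:[x_0,+\infty)\to\mathbb{R}$ be bounded twice differentiable functions such that (1) $\alpha(x)<\beta(x)$ for all $x>x_0$; (2) $\alpha_{xx}(x)>f(x,\alpha(x))$ and $\beta_{xx}(x)<f(x,\beta(x))$ for all $x>x_0$. Then there exists a solution $\phi$ of $\phi_{xx}=f(x,\phi)$ on $[x_0,+\infty)$ with $\alpha(x)<\phi(x)<\beta(x)$. If moreover (3) $\displaystyle\min_{x\in[0,L],\ y\in[\inf_{x\ge x_0}\alpha(x),\,\sup_{x\ge x_0}\beta(x)]}\frac{\partial f(x,y)}{\partial y}>0$, then there exists an $L$-periodic solution $\varphi$ of $\varphi_{xx}=f(x,\varphi)$ such that $$\lim_{x\to+\infty}\big(|\phi(x)-\varphi(x)|+|\phi_x(x)-\varphi_x(x)|\big)=0,$$ and $\varphi$ is the unique $L$-periodic solution of this equation with values in the interval $[\inf_{x\ge x_0}\alpha(x),\,\sup_{x\ge x_0}\beta(x)]$. *)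

(* Defs.v *)
From Stdlib Require Import Reals.
From Coquelicot Require Import Coquelicot.
Open Scope R_scope.

Definition periodic (L : R) (g : R -> R) : Prop := forall x, g (x + L) = g x.

(* infimum / supremum of g over [x0, +oo) (finite when g is bounded there) *)
Definition inf_from (x0 : R) (g : R -> R) : R :=
  real (Glb_Rbar (fun y => exists x, x0 <= x /\ y = g x)).
Definition sup_from (x0 : R) (g : R -> R) : R :=
  real (Lub_Rbar (fun y => exists x, x0 <= x /\ y = g x)).

Definition bounded_from (x0 : R) (g : R -> R) : Prop :=
  exists M, forall x, x0 <= x -> Rabs (g x) <= M.

Definition twice_diff_from (x0 : R) (g g1 g2 : R -> R) : Prop :=
  forall x, x0 <= x -> is_derive g x (g1 x) /\ is_derive g1 x (g2 x).

Definition solution_from (f : R -> R -> R) (x0 : R) (g g1 : R -> R) : Prop :=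
  forall x, x0 <= x -> is_derive g x (g1 x) /\ is_derive g1 x (f x (g x)).

Definition solution (f : R -> R -> R) (g g1 : R -> R) : Prop :=
  forall x, is_derive g x (g1 x) /\ is_derive g1 x (f x (g x)).

(* Main.v *)
Require Import Defs.
From Stdlib Require Import Reals.
From Coquelicot Require Import Coquelicot.
Open Scope R_scope.
From Stdlib Require Import Lra Lia ClassicalEpsilon Classical_Prop.

Lemma MVT_R (u u1 : R -> R) (a b : R) :
  a <= b -> (forall t, a <= t <= b -> is_derive u t (u1 t)) ->
  exists c, a <= c <= b /\ u b - u a = u1 c * (b - a).
Proof.
  intros Hab Hd.
  destruct (MVT_gen u a b u1) as [c [Hc Heq]].
  - intros x Hx. rewrite Rmin_left in Hx by lra. rewrite Rmax_right in Hx by lra. apply Hd; lra.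
  - intros x Hx. rewrite Rmin_left in Hx by lra. rewrite Rmax_right in Hx by lra.
    apply derivable_continuous_pt. exists (u1 x). apply is_derive_Reals. apply Hd; lra.
  - exists c. rewrite Rmin_left in Hc by lra. rewrite Rmax_right in Hc by lra. split; auto.
Qed.

Lemma quot_step (u : R -> R) c h l e :
  h <> 0 -> Rabs ((u (c + h) - u c) / h - l) < e ->
  exists q, u (c + h) - u c = q * h /\ Rabs (q - l) < e.
Proof.
  intros Hh H. exists ((u (c + h) - u c) / h). split; auto. field. auto.
Qed.

Lemma deriv_min0 (u : R -> R) c l d :
  0 < d -> is_derive u c l -> (forall t, Rabs (t - c) < d -> u c <= u t) -> l = 0.
Proof.
  intros Hd Hl Hmin. apply is_derive_Reals in Hl.
  destruct (Rtotal_order l 0) as [Hlt|[Heq|Hgt]]; auto; exfalso.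
  - destruct (Hl (- l / 2)) as [del Hdel]; [lra|].
    set (h := Rmin (del/2) (d/2)).
    assert (hpos: 0 < h) by (unfold h; apply Rmin_pos; destruct del; simpl; lra).
    assert (h <= del/2) by apply Rmin_l. assert (h <= d/2) by apply Rmin_r.
    destruct (quot_step u c h l (-l/2)) as [q [Hq1 Hq2]]; [lra| apply Hdel; [lra| rewrite Rabs_right by lra; destruct del; simpl in *; lra]|].
    assert (u c <= u (c + h)) by (apply Hmin; replace (c + h - c) with h by ring; rewrite Rabs_right; lra).
    apply Rabs_def2 in Hq2. nra.
  - destruct (Hl (l / 2)) as [del Hdel]; [lra|].
    set (h := Rmin (del/2) (d/2)).
    assert (hpos: 0 < h) by (unfold h; apply Rmin_pos; destruct del; simpl; lra).
    assert (h <= del/2) by apply Rmin_l. assert (h <= d/2) by apply Rmin_r.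
    destruct (quot_step u c (-h) l (l/2)) as [q [Hq1 Hq2]]; [lra| apply Hdel; [lra| rewrite Rabs_left by lra; destruct del; simpl in *; lra]|].
    assert (u c <= u (c + - h)) by (apply Hmin; replace (c + - h - c) with (-h) by ring; rewrite Rabs_left; lra).
    apply Rabs_def2 in Hq2. nra.
Qed.

Lemma deriv_max0 (u : R -> R) c l d :
  0 < d -> is_derive u c l -> (forall t, Rabs (t - c) < d -> u t <= u c) -> l = 0.
Proof.
  intros Hd Hl Hmax.
  assert (H: - l = 0).
  { apply (deriv_min0 (fun t => - u t) c (-l) d Hd).
    - apply (is_derive_opp u c l) in Hl. exact Hl.
    - intros t Ht. specialize (Hmax t Ht). lra. }
  lra.
Qed.

Lemma loc_strict_max (u u1 : R -> R) c d0 dd :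
  0 < d0 -> (forall t, c <= t <= c + d0 -> is_derive u t (u1 t)) ->
  u1 c = 0 -> is_derive u1 c dd -> dd < 0 ->
  forall del, 0 < del -> exists t, c < t < c + del /\ u t < u c.
Proof.
  intros Hd0 Hder H0 Hdd Hneg del Hdel.
  apply is_derive_Reals in Hdd.
  destruct (Hdd (- dd / 2)) as [eta Heta]; [lra|].
  assert (Hneg1 : forall h, 0 < h < eta -> u1 (c + h) < 0).
  { intros h Hh.
    destruct (quot_step u1 c h dd (-dd/2)) as [q [Hq1 Hq2]]; [lra| apply Heta; [lra| rewrite Rabs_right by lra; lra]|].
    apply Rabs_def2 in Hq2. rewrite H0 in Hq1. nra. }
  set (h0 := Rmin (Rmin del eta) d0 / 2).
  assert (Hh0 : 0 < h0 /\ h0 < del /\ h0 < eta /\ h0 <= d0).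
  { unfold h0. destruct eta as [e He]; simpl in *.
    assert (0 < Rmin (Rmin del e) d0) by (repeat apply Rmin_pos; lra).
    assert (Rmin (Rmin del e) d0 <= Rmin del e) by apply Rmin_l.
    assert (Rmin (Rmin del e) d0 <= d0) by apply Rmin_r.
    assert (Rmin del e <= del) by apply Rmin_l.
    assert (Rmin del e <= e) by apply Rmin_r. lra. }
  destruct Hh0 as [Hp [Hq [Hr Hs]]].
  exists (c + h0). split; [lra|].
  destruct (MVT_R u u1 (c + h0/2) (c + h0)) as [x1 [Hx1 E1]]; [lra| intros; apply Hder; lra|].
  destruct (MVT_R u u1 c (c + h0/2)) as [x2 [Hx2 E2]]; [lra| intros; apply Hder; lra|].
  assert (u1 x1 < 0) by (replace x1 with (c + (x1 - c)) by ring; apply Hneg1; lra).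
  assert (u1 x2 <= 0).
  { destruct (Req_dec x2 c) as [->|Hne]; [lra|].
    left. replace x2 with (c + (x2 - c)) by ring; apply Hneg1; lra. }
  nra.
Qed.

Lemma loc_strict_min (u u1 : R -> R) c d0 dd :
  0 < d0 -> (forall t, c <= t <= c + d0 -> is_derive u t (u1 t)) ->
  u1 c = 0 -> is_derive u1 c dd -> 0 < dd ->
  forall del, 0 < del -> exists t, c < t < c + del /\ u c < u t.
Proof.
  intros Hd0 Hder H0 Hdd Hpos del Hdel.
  destruct (loc_strict_max (fun t => - u t) (fun t => - u1 t) c d0 (- dd)) with (del := del)
    as [t [Ht1 Ht2]]; auto.
  - intros t Ht. apply (is_derive_opp u t (u1 t)). auto.
  - rewrite H0. ring.
  - apply (is_derive_opp u1 c dd). auto.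
  - lra.
  - exists t. split; auto. lra.
Qed.

Lemma bound2d (g : R -> R -> R) :
  (forall p : R * R, continuous (fun q : R * R => g (fst q) (snd q)) p) ->
  forall a b a' b', exists M, forall x y, a <= x <= b -> a' <= y <= b' -> Rabs (g x y) <= M.
Proof.
  intros Hc a b a' b'.
  assert (Hc2 : forall u v, exists e : posreal, forall x y, Rabs (x - u) < e -> Rabs (y - v) < e ->
            Rabs (g x y - g u v) < 1).
  { intros u v. assert (H := proj2 (continuity_2d_pt_filterlim g u v) (Hc (u, v))).
    destruct (H (mkposreal 1 Rlt_0_1)) as [e He]. exists e. intros x y Hx Hy. apply He; auto. }
  set (del := fun u v => proj1_sig (constructive_indefinite_description _ (Hc2 u v))).
  assert (Hdel : forall u v x y, Rabs (x - u) < del u v -> Rabs (y - v) < del u v ->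
            Rabs (g x y - g u v) < 1).
  { intros u v. unfold del. destruct (constructive_indefinite_description _ (Hc2 u v)) as [e He]. simpl. auto. }
  set (del2 := fun u v => mkposreal (del u v / 2) (ltac:(apply Rdiv_lt_0_compat; [apply cond_pos| lra]))).
  destruct (compactness_value_2d a b a' b' del2) as [d Hd].
  assert (Huc : forall x y x' y', a <= x <= b -> a' <= y <= b' ->
            Rabs (x - x') < d -> Rabs (y - y') < d -> Rabs (g x y - g x' y') < 2).
  { intros x y x' y' Hx Hy Hxx Hyy. apply NNPP. intro Hn. apply (Hd x y Hx Hy).
    intros [u [v [_ [_ [Hu [Hv Hdu]]]]]]. apply Hn. unfold del2 in *; simpl in *. pose proof (cond_pos (del u v)).
    assert (A1 : Rabs (g x y - g u v) < 1) by (apply Hdel; lra).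
    assert (A2 : Rabs (g x' y' - g u v) < 1).
    { apply Hdel.
      - replace (x' - u) with ((x - u) - (x - x')) by ring.
        eapply Rle_lt_trans; [apply Rabs_triang_inv2 || apply Rabs_triang|].
        rewrite Rabs_Ropp. lra.
      - replace (y' - v) with ((y - v) - (y - y')) by ring.
        eapply Rle_lt_trans; [apply Rabs_triang|]. rewrite Rabs_Ropp. lra. }
    apply Rabs_def2 in A1. apply Rabs_def2 in A2. apply Rabs_def1; lra. }
  set (st := d / 2).
  assert (Hst : 0 < st) by (unfold st; destruct d; simpl; lra).
  assert (Hwalk : forall n : nat, forall x y, a <= x <= b -> a' <= y <= b' ->
            x <= a + INR n * st -> y <= a' + INR n * st -> Rabs (g x y) <= Rabs (g a a') + 2 * INR n).
  { induction n as [|n IH]; intros x y Hx Hy Hxn Hyn.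
    - simpl in *. replace x with a by lra. replace y with a' by lra. lra.
    - rewrite S_INR in *. pose proof (pos_INR n). pose proof (cond_pos d). pose proof (Rmult_le_pos (INR n) st (pos_INR n) (Rlt_le _ _ Hst)).
      set (x1 := Rmax a (x - st)). set (y1 := Rmax a' (y - st)).
      assert (a <= x1 <= b /\ x1 <= a + INR n * st /\ Rabs (x - x1) < d).
      { unfold x1, Rmax. destruct (Rle_dec a (x - st)); unfold st in *;
          repeat split; try (apply Rabs_def1); lra. }
      assert (a' <= y1 <= b' /\ y1 <= a' + INR n * st /\ Rabs (y - y1) < d).
      { unfold y1, Rmax. destruct (Rle_dec a' (y - st)); unfold st in *;
          repeat split; try (apply Rabs_def1); lra. }
      assert (Rabs (g x1 y1) <= Rabs (g a a') + 2 * INR n) by (apply IH; tauto).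
      assert (Rabs (g x y - g x1 y1) < 2) by (apply Huc; tauto).
      assert (Rabs (g x y) <= Rabs (g x1 y1) + Rabs (g x y - g x1 y1)).
      { replace (g x y) with (g x1 y1 + (g x y - g x1 y1)) at 1 by ring. apply Rabs_triang. }
      lra. }
  destruct (INR_unbounded ((Rabs (b - a) + Rabs (b' - a')) / st)) as [n Hn].
  exists (Rabs (g a a') + 2 * INR n). intros x y Hx Hy. apply (Hwalk n); auto.
  - assert (INR n * st > Rabs (b - a) + Rabs (b' - a')).
    { apply Rmult_gt_compat_r with (r := st) in Hn; auto.
      unfold Rdiv in Hn. rewrite Rmult_assoc, Rinv_l in Hn by lra. lra. }
    pose proof (Rabs_pos (b' - a')). rewrite Rabs_right in H by lra. lra.
  - assert (INR n * st > Rabs (b - a) + Rabs (b' - a')).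
    { apply Rmult_gt_compat_r with (r := st) in Hn; auto.
      unfold Rdiv in Hn. rewrite Rmult_assoc, Rinv_l in Hn by lra. lra. }
    pose proof (Rabs_pos (b - a)). rewrite (Rabs_right (b' - a')) in H by lra. lra.
Qed.

Lemma per_nat (f : R -> R -> R) L (Hp : forall x y, f (x + L) y = f x y) :
  forall n x y, f (x + INR n * L) y = f x y.
Proof.
  induction n as [|n IH]; intros x y.
  - simpl. f_equal. ring.
  - rewrite S_INR. replace (x + (INR n + 1) * L) with ((x + INR n * L) + L) by ring.
    rewrite Hp. apply IH.
Qed.

Lemma per_reduce (f : R -> R -> R) L (HL : 0 < L) (Hp : forall x y, f (x + L) y = f x y) :
  forall x, exists x', 0 <= x' <= L /\ forall y, f x y = f x' y.
Proof.
  assert (Hred : forall n : nat, forall z, 0 <= z <= INR n * L ->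
             exists z', 0 <= z' <= L /\ forall y, f z y = f z' y).
  { induction n as [|n IH]; intros z Hz.
    - exists z. split; [simpl in Hz; lra| auto].
    - destruct (Rle_dec z L).
      + exists z. split; [lra| auto].
      + rewrite S_INR in Hz. destruct (IH (z - L)) as [z' [Hz' Hf]]; [lra|].
        exists z'. split; auto. intro y. rewrite <- Hf.
        replace z with ((z - L) + L) at 1 by ring. apply Hp. }
  intro x. destruct (INR_unbounded (Rabs x / L)) as [N HN].
  assert (HN2 : INR N * L > Rabs x).
  { apply Rmult_gt_compat_r with (r := L) in HN; auto.
    unfold Rdiv in HN. rewrite Rmult_assoc, Rinv_l in HN by lra. lra. }
  destruct (Hred (N + N)%nat (x + INR N * L)) as [z' [Hz' Hf]].
  { rewrite plus_INR. pose proof (Rle_abs (-x)). rewrite Rabs_Ropp in H. pose proof (Rle_abs x). split; lra. }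
  exists z'. split; auto. intro y. rewrite <- Hf. symmetry. apply per_nat. auto.
Qed.

Lemma inf_le x0 g : bounded_from x0 g -> forall x, x0 <= x -> inf_from x0 g <= g x.
Proof.
  intros [M HM] x Hx. unfold inf_from.
  destruct (Glb_Rbar_correct (fun y => exists x, x0 <= x /\ y = g x)) as [H1 H2].
  revert H1 H2. destruct (Glb_Rbar _) as [l| |]; simpl; intros H1 H2.
  - specialize (H1 (g x) (ex_intro _ x (conj Hx eq_refl))). simpl in H1. exact H1.
  - specialize (H1 (g x) (ex_intro _ x (conj Hx eq_refl))). simpl in H1. contradiction.
  - exfalso. specialize (H2 (Finite (- M))). simpl in H2. apply H2.
    intros y [t [Ht ->]]. simpl. specialize (HM t Ht). pose proof (Rle_abs (-(g t))). rewrite Rabs_Ropp in H. pose proof (Rle_abs (g t)). lra.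
Qed.

Lemma sup_ge x0 g : bounded_from x0 g -> forall x, x0 <= x -> g x <= sup_from x0 g.
Proof.
  intros [M HM] x Hx. unfold sup_from.
  destruct (Lub_Rbar_correct (fun y => exists x, x0 <= x /\ y = g x)) as [H1 H2].
  revert H1 H2. destruct (Lub_Rbar _) as [l| |]; simpl; intros H1 H2.
  - specialize (H1 (g x) (ex_intro _ x (conj Hx eq_refl))). simpl in H1. exact H1.
  - exfalso. specialize (H2 (Finite M)). simpl in H2. apply H2.
    intros y [t [Ht ->]]. simpl. specialize (HM t Ht). pose proof (Rle_abs (-(g t))). rewrite Rabs_Ropp in H. pose proof (Rle_abs (g t)). lra.
  - specialize (H1 (g x) (ex_intro _ x (conj Hx eq_refl))). simpl in H1. contradiction.
Qed.

Lemma der_plus (f g : R -> R) x df dg : is_derive f x df -> is_derive g x dg ->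
  is_derive (fun t => f t + g t) x (df + dg).
Proof. intros H1 H2. exact (is_derive_plus f g x df dg H1 H2). Qed.
Lemma der_minus (f g : R -> R) x df dg : is_derive f x df -> is_derive g x dg ->
  is_derive (fun t => f t - g t) x (df - dg).
Proof. intros H1 H2. exact (is_derive_minus f g x df dg H1 H2). Qed.
Lemma der_mult (f g : R -> R) x df dg : is_derive f x df -> is_derive g x dg ->
  is_derive (fun t => f t * g t) x (df * g x + f x * dg).
Proof. intros H1 H2. exact (is_derive_mult f g x df dg H1 H2 Rmult_comm). Qed.
Lemma der_const (c x : R) : is_derive (fun _ => c) x 0.
Proof. exact (is_derive_const c x). Qed.
Lemma der_ext (f g : R -> R) (x l l' : R) : (forall t, f t = g t) -> l = l' -> is_derive f x l -> is_derive g x l'.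
Proof. intros H E H2. subst l'. exact (is_derive_ext f g x l H H2). Qed.

Lemma deriv_cont (u : R -> R) t l : is_derive u t l -> continuous u t.
Proof.
  intro H. apply continuity_pt_filterlim. apply derivable_continuous_pt.
  exists l. apply is_derive_Reals. exact H.
Qed.

Lemma cont_eps (U : R -> R) t :
  continuous U t <-> forall eps, 0 < eps -> exists d, 0 < d /\ forall tau, Rabs (tau - t) < d -> Rabs (U tau - U t) < eps.
Proof.
  split.
  - intros H eps Heps. apply continuity_pt_filterlim in H.
    destruct (H eps Heps) as [d [Hd Hd2]]. exists d. split; auto. intros tau Ht.
    destruct (Req_dec tau t) as [->|Hne]. { rewrite Rminus_eq_0, Rabs_R0. auto. }
    apply Hd2. split; [split; [exact I| auto]| exact Ht].
  - intros H. apply continuity_pt_filterlim. intros eps Heps.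
    destruct (H eps Heps) as [d [Hd Hd2]]. exists d. split; auto. intros tau [_ Ht]. apply Hd2. exact Ht.
Qed.

Lemma small_zero x E : (forall n : nat, Rabs x <= E * (1/2)^n) -> x = 0.
Proof.
  intros H. destruct (Req_dec x 0) as [|Hne]; auto. exfalso.
  assert (Hp : 0 < Rabs x) by (apply Rabs_pos_lt; auto).
  assert (HE : 0 < E). { specialize (H 0%nat). simpl in H. lra. }
  destruct (pow_lt_1_zero (1/2) ltac:(rewrite Rabs_right; lra) (Rabs x / E)) as [N HN].
  { apply Rdiv_lt_0_compat; auto. }
  specialize (HN N (le_n N)). specialize (H N).
  rewrite Rabs_right in HN by (apply Rle_ge, pow_le; lra).
  apply Rmult_lt_compat_l with (r := E) in HN; auto.
  replace (E * (Rabs x / E)) with (Rabs x) in HN by (field; lra). lra.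
Qed.

Lemma geo_cauchy (u : nat -> R) D : (forall n, Rabs (u (S n) - u n) <= D * (1/2)^n) ->
  forall n j, Rabs (u (n + j)%nat - u n) <= 2 * D * (1/2)^n * (1 - (1/2)^j).
Proof.
  intros H n j. induction j as [|j IH].
  - rewrite Nat.add_0_r. rewrite Rminus_eq_0, Rabs_R0. simpl. lra.
  - replace (n + S j)%nat with (S (n + j)) by lia.
    specialize (H (n + j)%nat). rewrite pow_add in H.
    replace (u (S (n + j)) - u n) with ((u (S (n + j)) - u (n + j)%nat) + (u (n + j)%nat - u n)) by ring.
    eapply Rle_trans; [apply Rabs_triang|]. simpl. nra.
Qed.

Lemma geo_limit (u : nat -> R) D : (forall n, Rabs (u (S n) - u n) <= D * (1/2)^n) ->
  is_lim_seq u (real (Lim_seq u)) /\ forall n, Rabs (u n - Lim_seq u) <= 2 * D * (1/2)^n.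
Proof.
  intros H.
  assert (HD : 0 <= D). { specialize (H 0%nat). simpl in H. pose proof (Rabs_pos (u 1%nat - u 0%nat)). lra. }
  assert (Hc : forall n j, Rabs (u (n + j)%nat - u n) <= 2 * D * (1/2)^n).
  { intros n j. eapply Rle_trans; [apply geo_cauchy; auto|].
    assert (0 <= (1/2)^j) by (apply pow_le; lra). assert (0 <= (1/2)^n) by (apply pow_le; lra).
    assert (0 <= D * (1/2)^n) by (apply Rmult_le_pos; lra).
    assert (0 <= D * (1/2)^n * (1/2)^j) by (apply Rmult_le_pos; lra). nra. }
  assert (Hex : ex_finite_lim_seq u).
  { apply ex_lim_seq_cauchy_corr. intro eps.
    destruct (Req_dec D 0) as [HD0|HD0].
    { exists 0%nat. intros n m _ _.
      pose proof (Hc 0%nat n) as A. pose proof (Hc 0%nat m) as B. rewrite HD0 in A, B. simpl in A, B.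
      replace (u n - u m) with ((u n - u 0%nat) - (u m - u 0%nat)) by ring.
      eapply Rle_lt_trans; [apply Rabs_triang|]. rewrite Rabs_Ropp. destruct eps; simpl. lra. }
    destruct (pow_lt_1_zero (1/2) ltac:(rewrite Rabs_right; lra) (eps / (4 * D))) as [N HN].
    { apply Rdiv_lt_0_compat; [apply cond_pos| lra]. }
    exists N. intros n m Hn Hm.
    specialize (HN N (le_n N)). rewrite Rabs_right in HN by (apply Rle_ge, pow_le; lra).
    pose proof (Hc N (n - N)%nat) as A. pose proof (Hc N (m - N)%nat) as B.
    replace (N + (n - N))%nat with n in A by lia. replace (N + (m - N))%nat with m in B by lia.
    replace (u n - u m) with ((u n - u N) - (u m - u N)) by ring.
    eapply Rle_lt_trans; [apply Rabs_triang|]. rewrite Rabs_Ropp.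
    assert (2 * D * (1/2)^N < eps / 2).
    { apply Rmult_lt_compat_l with (r := 4 * D) in HN; [|lra].
      replace (4 * D * (eps / (4 * D))) with (pos eps) in HN by (field; lra). lra. }
    lra. }
  assert (Hl := Lim_seq_correct' u Hex). split; [exact Hl|].
  intros n. destruct (Rle_lt_dec (Rabs (u n - Lim_seq u)) (2 * D * (1/2)^n)) as [|Hgt]; auto. exfalso.
  apply is_lim_seq_spec in Hl.
  destruct (Hl (mkposreal _ (Rlt_Rminus _ _ Hgt))) as [N HN].
  specialize (HN (n + N)%nat ltac:(lia)). simpl in HN. specialize (Hc n N).
  assert (Rabs (u n - Lim_seq u) <= Rabs (u n - u (n + N)%nat) + Rabs (u (n + N)%nat - Lim_seq u)).
  { replace (u n - Lim_seq u) with ((u n - u (n + N)%nat) + (u (n + N)%nat - Lim_seq u)) by ring.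
    apply Rabs_triang. }
  rewrite <- Rabs_Ropp in Hc. replace (- (u (n + N)%nat - u n)) with (u n - u (n + N)%nat) in Hc by ring.
  lra.
Qed.

Lemma RInt_cont_ex (g : R -> R) a b : (forall t, continuous g t) -> ex_RInt g a b.
Proof. intros H. apply (ex_RInt_continuous (V:=R_CompleteNormedModule)). intros; auto. Qed.

Lemma RInt_abs_bound (g : R -> R) x0 t B :
  (forall tau, continuous g tau) ->
  (forall tau, Rmin x0 t <= tau <= Rmax x0 t -> Rabs (g tau) <= B) ->
  Rabs (RInt g x0 t) <= Rabs (t - x0) * B.
Proof.
  intros Hc Hb. destruct (Rle_dec x0 t) as [Hle|Hlt].
  - rewrite (Rabs_right (t - x0)) by lra. apply abs_RInt_le_const; auto.
    + apply RInt_cont_ex; auto.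
    + intros tau Ht. apply Hb. rewrite Rmin_left, Rmax_right; lra.
  - rewrite <- opp_RInt_swap by (apply RInt_cont_ex; auto).
    change (Rabs (- RInt g t x0) <= Rabs (t - x0) * B).
    rewrite Rabs_Ropp, (Rabs_left (t - x0)) by lra.
    replace (- (t - x0)) with (x0 - t) by ring. apply abs_RInt_le_const; try lra.
    + apply RInt_cont_ex; auto.
    + intros tau Ht. apply Hb. rewrite Rmin_right, Rmax_left; lra.
Qed.

Lemma RInt_exp_bound (g : R -> R) x0 t B k :
  0 < k -> (forall tau, continuous g tau) ->
  (forall tau, Rmin x0 t <= tau <= Rmax x0 t -> Rabs (g tau) <= B * exp (k * Rabs (tau - x0))) ->
  Rabs (RInt g x0 t) <= B * exp (k * Rabs (t - x0)) / k.
Proof.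
  intros Hk Hc Hb.
  assert (HB : 0 <= B).
  { specialize (Hb x0). rewrite Rminus_eq_0, Rabs_R0, Rmult_0_r, exp_0, Rmult_1_r in Hb.
    pose proof (Rabs_pos (g x0)). apply Rle_trans with (Rabs (g x0)); auto.
    apply Hb. split; [apply Rmin_l| apply Rmax_l]. }
  destruct (Rle_dec x0 t) as [Hle|Hlt].
  - eapply Rle_trans; [apply abs_RInt_le; auto; apply RInt_cont_ex; auto|].
    assert (Hint : is_RInt (fun tau => B * exp (k * (tau - x0))) x0 t
                     (minus (B * exp (k * (t - x0)) / k) (B * exp (k * (x0 - x0)) / k))).
    { apply (is_RInt_derive (fun tau => B * exp (k * (tau - x0)) / k)).
      - intros x _. auto_derive; auto. replace (x + - x0) with (x - x0) by ring. field. lra.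
      - intros x _. apply continuity_pt_filterlim.
        apply derivable_continuous_pt. apply (derivable_pt_scal (fun x => exp (k * (x - x0)))).
        reg. }
    eapply Rle_trans. apply RInt_le; auto.
    + apply RInt_cont_ex. intros tau. apply continuity_pt_filterlim. apply continuity_pt_filterlim.
      apply (continuous_comp g Rabs). auto. apply continuity_pt_filterlim. apply Rcontinuity_abs.
    + eexists; exact Hint.
    + intros x Hx. specialize (Hb x). rewrite (Rabs_right (x - x0)) in Hb by lra. apply Hb.
      rewrite Rmin_left, Rmax_right; lra.
    + rewrite (is_RInt_unique _ _ _ _ Hint). rewrite (Rabs_right (t - x0)) by lra.
      unfold minus, plus, opp; simpl. rewrite Rminus_eq_0, Rmult_0_r, exp_0.
      assert (0 <= B * 1 / k) by (apply Rdiv_le_0_compat; lra). lra.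
  - rewrite <- opp_RInt_swap by (apply RInt_cont_ex; auto).
    change (Rabs (- RInt g t x0) <= B * exp (k * Rabs (t - x0)) / k). rewrite Rabs_Ropp.
    eapply Rle_trans; [apply abs_RInt_le; [lra| apply RInt_cont_ex; auto]|].
    assert (Hint : is_RInt (fun tau => B * exp (k * (x0 - tau))) t x0
                     (minus (- (B * exp (k * (x0 - x0)) / k)) (- (B * exp (k * (x0 - t)) / k)))).
    { apply (is_RInt_derive (fun tau => - (B * exp (k * (x0 - tau)) / k))).
      - intros x _. auto_derive; auto. replace (x0 + - x) with (x0 - x) by ring. field. lra.
      - intros x _. apply continuity_pt_filterlim.
        apply derivable_continuous_pt. apply (derivable_pt_scal (fun x => exp (k * (x0 - x)))).
        reg. }
    eapply Rle_trans. apply RInt_le; try lra.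
    + apply RInt_cont_ex. intros tau. apply continuity_pt_filterlim. apply continuity_pt_filterlim.
      apply (continuous_comp g Rabs). auto. apply continuity_pt_filterlim. apply Rcontinuity_abs.
    + eexists; exact Hint.
    + intros x Hx. specialize (Hb x). rewrite (Rabs_left (x - x0)) in Hb by lra.
      replace (- (x - x0)) with (x0 - x) in Hb by ring. apply Hb.
      rewrite Rmin_right, Rmax_left; lra.
    + rewrite (is_RInt_unique _ _ _ _ Hint). rewrite (Rabs_left (t - x0)) by lra.
      replace (- (t - x0)) with (x0 - t) by ring.
      unfold minus, plus, opp; simpl. rewrite Rminus_eq_0, Rmult_0_r, exp_0.
      assert (0 <= B * 1 / k) by (apply Rdiv_le_0_compat; lra). lra.
Qed.

Lemma cont_minus (f g : R -> R) x : continuous f x -> continuous g x -> continuous (fun t => f t - g t) x.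
Proof. intros H1 H2. exact (continuous_minus (K:=R_AbsRing) (V:=R_NormedModule) f g x H1 H2). Qed.
Lemma cont_plus (f g : R -> R) x : continuous f x -> continuous g x -> continuous (fun t => f t + g t) x.
Proof. intros H1 H2. exact (continuous_plus (K:=R_AbsRing) (V:=R_NormedModule) f g x H1 H2). Qed.

Lemma contF_comp (F : R -> R -> R)
  (HFc : forall p : R * R, continuous (fun q : R * R => F (fst q) (snd q)) p)
  (Y : R -> R) t : continuous Y t -> continuous (fun tau => F tau (Y tau)) t.
Proof.
  intros HY. apply (continuous_comp_2 (fun tau => tau) Y F t); [apply continuous_id| auto| apply HFc].
Qed.

Lemma RInt_deriv (g : R -> R) x0 t : (forall tau, continuous g tau) ->
  is_derive (fun t => RInt g x0 t) t (g t).
Proof.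
  intros H. apply (is_derive_RInt g _ x0 t).
  - exists (mkposreal 1 Rlt_0_1). intros y _. apply (RInt_correct (V:=R_CompleteNormedModule)). apply RInt_cont_ex; auto.
  - apply H.
Qed.

Lemma RInt_cont (g : R -> R) x0 t : (forall tau, continuous g tau) -> continuous (fun t => RInt g x0 t) t.
Proof. intros H. eapply deriv_cont. apply RInt_deriv; auto. Qed.

Fixpoint pic (F : R -> R -> R) (x0 p s : R) (n : nat) : (R -> R) * (R -> R) :=
  match n with
  | O => (fun _ => p, fun _ => s)
  | S n => (fun t => p + RInt (snd (pic F x0 p s n)) x0 t,
            fun t => s + RInt (fun tau => F tau (fst (pic F x0 p s n) tau)) x0 t)
  end.

Lemma pic_cont (F : R -> R -> R)
  (HFc : forall p : R * R, continuous (fun q : R * R => F (fst q) (snd q)) p) x0 p s : forall n t,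
  continuous (fst (pic F x0 p s n)) t /\ continuous (snd (pic F x0 p s n)) t.
Proof.
  induction n as [|n IH]; intros t; simpl.
  - split; apply continuous_const.
  - split; apply cont_plus; try apply continuous_const; apply RInt_cont.
    + intros; apply IH.
    + intros. apply (contF_comp F HFc). apply IH.
Qed.

Lemma ky_le_exp k y : 0 <= k * y -> k * y <= exp (k * y).
Proof. intros H. pose proof (exp_ineq1_le (k * y)). lra. Qed.

Lemma exp_mono_abs k tau t x0 : 0 < k -> Rmin x0 t <= tau <= Rmax x0 t ->
  exp (k * Rabs (tau - x0)) <= exp (k * Rabs (t - x0)).
Proof.
  intros Hk Ht. destruct (Req_dec (k * Rabs (tau - x0)) (k * Rabs (t - x0))) as [E|E].
  { rewrite E. lra. }
  left. apply exp_increasing. apply Rmult_lt_compat_l; auto.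
  unfold Rmin, Rmax in Ht. destruct (Rle_dec x0 t).
  - rewrite !Rabs_right by lra. assert (tau <> t) by (intro; subst; lra). lra.
  - rewrite !Rabs_left1 by lra. assert (tau <> t) by (intro; subst; lra). lra.
Qed.

Lemma pm_lem (a b : R) : a + b - a = b.
Proof. ring. Qed.

Lemma pic_est (F : R -> R -> R) K Lam x0 p s
  (HFc : forall p : R * R, continuous (fun q : R * R => F (fst q) (snd q)) p)
  (HFK : forall t y, Rabs (F t y) <= K)
  (HFL : forall t y1 y2, Rabs (F t y1 - F t y2) <= Lam * Rabs (y1 - y2))
  (HLam : 0 <= Lam) :
  forall n t,
    Rabs (fst (pic F x0 p s (S n)) t - fst (pic F x0 p s n) t) +
    Rabs (snd (pic F x0 p s (S n)) t - snd (pic F x0 p s n) t)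
    <= (Rabs s + K) / (2 * (1 + Lam)) * exp (2 * (1 + Lam) * Rabs (t - x0)) * (1/2)^n.
Proof.
  set (k := 2 * (1 + Lam)). assert (Hk : 0 < k) by (unfold k; lra).
  assert (HK : 0 <= K) by (pose proof (HFK 0 0); pose proof (Rabs_pos (F 0 0)); lra).
  induction n as [|n IH]; intros t.
  - simpl. rewrite !pm_lem.
    pose proof (RInt_abs_bound (fun _ => s) x0 t (Rabs s) (fun _ => continuous_const _ _) (fun _ _ => Rle_refl _)).
    pose proof (RInt_abs_bound (fun tau => F tau p) x0 t K
                  (fun tau => contF_comp F HFc _ tau (continuous_const _ _)) (fun tau _ => HFK tau p)).
    pose proof (ky_le_exp k (Rabs (t - x0)) ltac:(apply Rmult_le_pos; [lra| apply Rabs_pos])).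
    assert (Rabs (t - x0) * (Rabs s + K) <= (Rabs s + K) / k * exp (k * Rabs (t - x0))).
    { assert (Rabs (t - x0) <= exp (k * Rabs (t - x0)) / k).
      { apply (Rmult_le_reg_l k); auto. unfold Rdiv.
        rewrite <- Rmult_assoc, (Rmult_comm k (exp _)), Rmult_assoc, Rinv_r, Rmult_1_r by lra. lra. }
      apply Rle_trans with (exp (k * Rabs (t - x0)) / k * (Rabs s + K)).
      - apply Rmult_le_compat_r; auto. pose proof (Rabs_pos s); lra.
      - right. field. lra. }
    lra.
  - set (Y1 := fst (pic F x0 p s (S n))). set (Y0 := fst (pic F x0 p s n)).
    set (Z1 := snd (pic F x0 p s (S n))). set (Z0 := snd (pic F x0 p s n)).
    assert (HY1 : forall t, continuous Y1 t) by (intros; apply pic_cont; auto).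
    assert (HY0 : forall t, continuous Y0 t) by (intros; apply pic_cont; auto).
    assert (HZ1 : forall t, continuous Z1 t) by (intros; apply pic_cont; auto).
    assert (HZ0 : forall t, continuous Z0 t) by (intros; apply pic_cont; auto).
    change (Rabs ((p + RInt Z1 x0 t) - (p + RInt Z0 x0 t)) +
            Rabs ((s + RInt (fun tau => F tau (Y1 tau)) x0 t) - (s + RInt (fun tau => F tau (Y0 tau)) x0 t))
            <= (Rabs s + K) / k * exp (k * Rabs (t - x0)) * (1/2)^(S n)).
    replace ((p + RInt Z1 x0 t) - (p + RInt Z0 x0 t)) with (RInt (fun tau => Z1 tau - Z0 tau) x0 t).
    2:{ rewrite (RInt_minus (V:=R_CompleteNormedModule) Z1 Z0) by (apply RInt_cont_ex; auto). unfold minus, plus, opp; simpl. ring. }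
    replace ((s + RInt (fun tau => F tau (Y1 tau)) x0 t) - (s + RInt (fun tau => F tau (Y0 tau)) x0 t))
      with (RInt (fun tau => F tau (Y1 tau) - F tau (Y0 tau)) x0 t).
    2:{ rewrite (RInt_minus (V:=R_CompleteNormedModule) (fun tau => F tau (Y1 tau)) (fun tau => F tau (Y0 tau)))
          by (apply RInt_cont_ex; intros; apply (contF_comp F HFc); auto). unfold minus, plus, opp; simpl. ring. }
    set (B := (Rabs s + K) / k * (1/2)^n).
    assert (HB : forall tau, Rabs (Y1 tau - Y0 tau) + Rabs (Z1 tau - Z0 tau) <= B * exp (k * Rabs (tau - x0))).
    { intros tau. unfold B. specialize (IH tau). fold k in IH. fold Y1 Y0 Z1 Z0 in IH. lra. }
    assert (A1 : Rabs (RInt (fun tau => Z1 tau - Z0 tau) x0 t) <= B * exp (k * Rabs (t - x0)) / k).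
    { apply RInt_exp_bound; auto. intros; apply cont_minus; auto.
      intros tau _. specialize (HB tau). pose proof (Rabs_pos (Y1 tau - Y0 tau)). lra. }
    assert (A2 : Rabs (RInt (fun tau => F tau (Y1 tau) - F tau (Y0 tau)) x0 t) <= (Lam * B) * exp (k * Rabs (t - x0)) / k).
    { apply RInt_exp_bound; auto. intros; apply cont_minus; apply (contF_comp F HFc); auto.
      intros tau _. specialize (HB tau). specialize (HFL tau (Y1 tau) (Y0 tau)).
      pose proof (Rabs_pos (Z1 tau - Z0 tau)).
      assert (Lam * Rabs (Y1 tau - Y0 tau) <= Lam * (B * exp (k * Rabs (tau - x0)))) by (apply Rmult_le_compat_l; lra).
      lra. }
    assert (E : B * exp (k * Rabs (t - x0)) / k + Lam * B * exp (k * Rabs (t - x0)) / k =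
                (Rabs s + K) / k * exp (k * Rabs (t - x0)) * (1 / 2) ^ S n).
    { unfold B, k. simpl. field. lra. }
    lra.
Qed.

Lemma exp_le_mono a b : a <= b -> exp a <= exp b.
Proof. intros H. destruct (Req_dec a b) as [->|]; [lra|]. left. apply exp_increasing. lra. Qed.

Lemma ulim_cont (u : nat -> R -> R) (U E : R -> R) t :
  (forall n, continuous (u n) t) -> (forall n tau, Rabs (u n tau - U tau) <= E tau * (1/2)^n) ->
  (exists M, forall tau, Rabs (tau - t) < 1 -> E tau <= M) -> continuous U t.
Proof.
  intros Hc Hb [M HM]. apply cont_eps. intros eps Heps.
  assert (HM0 : 0 <= M).
  { specialize (HM t ltac:(rewrite Rminus_eq_0, Rabs_R0; lra)). specialize (Hb 0%nat t).
    simpl in Hb. pose proof (Rabs_pos (u 0%nat t - U t)). lra. }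
  destruct (pow_lt_1_zero (1/2) ltac:(rewrite Rabs_right; lra) (eps / (3 * (M + 1)))) as [N HN].
  { apply Rdiv_lt_0_compat; lra. }
  specialize (HN N (le_n N)). rewrite Rabs_right in HN by (apply Rle_ge, pow_le; lra).
  assert (HMN : M * (1/2)^N < eps / 3).
  { apply Rle_lt_trans with ((M + 1) * (1/2)^N).
    - apply Rmult_le_compat_r; [apply pow_le|]; lra.
    - apply Rmult_lt_compat_l with (r := M + 1) in HN; [|lra].
      replace ((M + 1) * (eps / (3 * (M + 1)))) with (eps / 3) in HN by (field; lra). lra. }
  destruct (proj1 (cont_eps (u N) t) (Hc N) (eps/3) ltac:(lra)) as [d [Hd Hd2]].
  exists (Rmin d 1). split; [apply Rmin_pos; lra|]. intros tau Ht.
  assert (Ht1 : Rabs (tau - t) < d) by (eapply Rlt_le_trans; [exact Ht| apply Rmin_l]).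
  assert (Ht2 : Rabs (tau - t) < 1) by (eapply Rlt_le_trans; [exact Ht| apply Rmin_r]).
  specialize (Hd2 tau Ht1).
  pose proof (Hb N tau) as B1. pose proof (Hb N t) as B2.
  assert (E tau * (1/2)^N <= M * (1/2)^N) by (apply Rmult_le_compat_r; [apply pow_le; lra| apply HM; auto]).
  assert (E t * (1/2)^N <= M * (1/2)^N) by (apply Rmult_le_compat_r; [apply pow_le; lra| apply HM; rewrite Rminus_eq_0, Rabs_R0; lra]).
  replace (U tau - U t) with (- (u N tau - U tau) + (u N tau - u N t) + (u N t - U t)) by ring.
  eapply Rle_lt_trans; [apply Rabs_triang|].
  eapply Rle_lt_trans; [apply Rplus_le_compat_r; apply Rabs_triang|].
  rewrite Rabs_Ropp. lra.
Qed.

Lemma picard_exists (F : R -> R -> R) K Lam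
  (HFc : forall p : R * R, continuous (fun q : R * R => F (fst q) (snd q)) p)
  (HFK : forall t y, Rabs (F t y) <= K)
  (HFL : forall t y1 y2, Rabs (F t y1 - F t y2) <= Lam * Rabs (y1 - y2))
  (HLam : 0 <= Lam) :
  forall x0 p s, exists Y Z : R -> R,
    (forall t, is_derive Y t (Z t) /\ is_derive Z t (F t (Y t))) /\ Y x0 = p /\ Z x0 = s.
Proof.
  intros x0 p s.
  set (k := 2 * (1 + Lam)). assert (Hk : 0 < k) by (unfold k; lra).
  assert (HK : 0 <= K) by (pose proof (HFK 0 0); pose proof (Rabs_pos (F 0 0)); lra).
  set (C := (Rabs s + K) / k).
  assert (HC : 0 <= C) by (unfold C; apply Rdiv_le_0_compat; [pose proof (Rabs_pos s)|]; lra).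
  set (Yn := fun n => fst (pic F x0 p s n)). set (Zn := fun n => snd (pic F x0 p s n)).
  set (Y := fun t => real (Lim_seq (fun n => Yn n t))).
  set (Z := fun t => real (Lim_seq (fun n => Zn n t))).
  set (Ex := fun t => 2 * (C * exp (k * Rabs (t - x0)))).
  assert (Hest := pic_est F K Lam x0 p s HFc HFK HFL HLam). fold k in Hest. fold C in Hest.
  assert (HY : forall n t, Rabs (Yn n t - Y t) <= Ex t * (1/2)^n).
  { intros n t. apply (geo_limit (fun n => Yn n t) (C * exp (k * Rabs (t - x0)))).
    intros m. specialize (Hest m t). pose proof (Rabs_pos (snd (pic F x0 p s (S m)) t - snd (pic F x0 p s m) t)).
    unfold Yn. lra. }
  assert (HZ : forall n t, Rabs (Zn n t - Z t) <= Ex t * (1/2)^n).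
  { intros n t. apply (geo_limit (fun n => Zn n t) (C * exp (k * Rabs (t - x0)))).
    intros m. specialize (Hest m t). pose proof (Rabs_pos (fst (pic F x0 p s (S m)) t - fst (pic F x0 p s m) t)).
    unfold Zn. lra. }
  assert (HEx : forall t, exists M, forall tau, Rabs (tau - t) < 1 -> Ex tau <= M).
  { intros t. exists (2 * (C * exp (k * (Rabs (t - x0) + 1)))). intros tau Ht. unfold Ex.
    apply Rmult_le_compat_l; [lra|]. apply Rmult_le_compat_l; auto. apply exp_le_mono.
    apply Rmult_le_compat_l; [lra|].
    replace (tau - x0) with ((tau - t) + (t - x0)) by ring.
    eapply Rle_trans; [apply Rabs_triang|]. lra. }
  assert (HYc : forall t, continuous Y t).
  { intros t. apply (ulim_cont Yn Y Ex t); auto. intros n. apply (pic_cont F HFc). }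
  assert (HZc : forall t, continuous Z t).
  { intros t. apply (ulim_cont Zn Z Ex t); auto. intros n. apply (pic_cont F HFc). }
  assert (HExb : forall t tau, Rmin x0 t <= tau <= Rmax x0 t -> Ex tau <= Ex t).
  { intros t tau Ht. unfold Ex. apply Rmult_le_compat_l; [lra|]. apply Rmult_le_compat_l; auto.
    apply exp_mono_abs; auto. }
  assert (HEx0 : forall t, 0 <= Ex t).
  { intros t. unfold Ex. pose proof (exp_pos (k * Rabs (t - x0))). apply Rmult_le_pos; [lra|]. apply Rmult_le_pos; lra. }
  assert (HYeq : forall t, Y t = p + RInt Z x0 t).
  { intros t. apply Rminus_diag_uniq. apply (small_zero _ (Ex t * (1 + Rabs (t - x0)))).
    intros n.
    assert (E1 : Yn (S n) t = p + RInt (Zn n) x0 t) by reflexivity.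
    replace (Y t - (p + RInt Z x0 t)) with (- (Yn (S n) t - Y t) + RInt (fun tau => Zn n tau - Z tau) x0 t).
    2:{ rewrite E1. rewrite (RInt_minus (V:=R_CompleteNormedModule) (Zn n) Z).
        - unfold minus, plus, opp; simpl. ring.
        - apply RInt_cont_ex. intros; apply (pic_cont F HFc).
        - apply RInt_cont_ex. auto. }
    eapply Rle_trans; [apply Rabs_triang|]. rewrite Rabs_Ropp.
    assert (A1 : Rabs (Yn (S n) t - Y t) <= Ex t * (1/2)^n).
    { eapply Rle_trans; [apply HY|]. apply Rmult_le_compat_l; auto. simpl. pose proof (pow_le (1/2) n). lra. }
    assert (A2 : Rabs (RInt (fun tau => Zn n tau - Z tau) x0 t) <= Rabs (t - x0) * (Ex t * (1/2)^n)).
    { apply RInt_abs_bound.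
      - intros; apply cont_minus; auto. apply (pic_cont F HFc).
      - intros tau Htau. eapply Rle_trans; [apply HZ|]. apply Rmult_le_compat_r; [apply pow_le; lra|]. auto. }
    assert (0 <= Ex t * (1/2)^n) by (apply Rmult_le_pos; auto; apply pow_le; lra).
    nra. }
  assert (HZeq : forall t, Z t = s + RInt (fun tau => F tau (Y tau)) x0 t).
  { intros t. apply Rminus_diag_uniq. apply (small_zero _ (Ex t * (1 + Lam * Rabs (t - x0)))).
    intros n.
    assert (E1 : Zn (S n) t = s + RInt (fun tau => F tau (Yn n tau)) x0 t) by reflexivity.
    replace (Z t - (s + RInt (fun tau => F tau (Y tau)) x0 t)) with
      (- (Zn (S n) t - Z t) + RInt (fun tau => F tau (Yn n tau) - F tau (Y tau)) x0 t).
    2:{ rewrite E1. rewrite (RInt_minus (V:=R_CompleteNormedModule) (fun tau => F tau (Yn n tau)) (fun tau => F tau (Y tau))).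
        - unfold minus, plus, opp; simpl. ring.
        - apply RInt_cont_ex. intros; apply (contF_comp F HFc); apply (pic_cont F HFc).
        - apply RInt_cont_ex. intros; apply (contF_comp F HFc); auto. }
    eapply Rle_trans; [apply Rabs_triang|]. rewrite Rabs_Ropp.
    assert (A1 : Rabs (Zn (S n) t - Z t) <= Ex t * (1/2)^n).
    { eapply Rle_trans; [apply HZ|]. apply Rmult_le_compat_l; auto. simpl. pose proof (pow_le (1/2) n). lra. }
    assert (A2 : Rabs (RInt (fun tau => F tau (Yn n tau) - F tau (Y tau)) x0 t) <= Rabs (t - x0) * (Lam * (Ex t * (1/2)^n))).
    { apply RInt_abs_bound.
      - intros; apply cont_minus; apply (contF_comp F HFc); auto. apply (pic_cont F HFc).
      - intros tau Htau. eapply Rle_trans; [apply HFL|]. apply Rmult_le_compat_l; auto.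
        eapply Rle_trans; [apply HY|]. apply Rmult_le_compat_r; [apply pow_le; lra|]. auto. }
    assert (0 <= Ex t * (1/2)^n) by (apply Rmult_le_pos; auto; apply pow_le; lra).
    assert (0 <= Lam * (Ex t * (1/2)^n)) by (apply Rmult_le_pos; auto).
    nra. }
  exists Y, Z. split; [|split].
  - intros t. split.
    + apply (der_ext (fun t => p + RInt Z x0 t) Y t (0 + Z t)); [intros; symmetry; auto| apply Rplus_0_l|].
      apply der_plus; [apply der_const| apply RInt_deriv; auto].
    + apply (der_ext (fun t => s + RInt (fun tau => F tau (Y tau)) x0 t) Z t (0 + F t (Y t))); [intros; symmetry; auto| apply Rplus_0_l|].
      apply der_plus; [apply der_const| apply (RInt_deriv (fun tau => F tau (Y tau)))].
      intros; apply (contF_comp F HFc); auto.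
  - rewrite HYeq, RInt_point. unfold zero; simpl. ring.
  - rewrite HZeq, RInt_point. unfold zero; simpl. ring.
Qed.

Lemma dep_bound (F : R -> R -> R) Lam
  (HFL : forall t y1 y2, Rabs (F t y1 - F t y2) <= Lam * Rabs (y1 - y2))
  (HLam : 0 <= Lam) (Y1 Z1 Y2 Z2 : R -> R) :
  (forall t, is_derive Y1 t (Z1 t) /\ is_derive Z1 t (F t (Y1 t))) ->
  (forall t, is_derive Y2 t (Z2 t) /\ is_derive Z2 t (F t (Y2 t))) ->
  forall x0 t, x0 <= t ->
  (Y1 t - Y2 t)^2 + (Z1 t - Z2 t)^2 <=
  ((Y1 x0 - Y2 x0)^2 + (Z1 x0 - Z2 x0)^2) * exp ((1 + Lam) * (t - x0)).
Proof.
  intros H1 H2 x0 t Ht.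
  set (c := 1 + Lam).
  set (dY := fun tau => Y1 tau - Y2 tau). set (dZ := fun tau => Z1 tau - Z2 tau).
  set (dF := fun tau => F tau (Y1 tau) - F tau (Y2 tau)).
  set (En := fun tau => dY tau * dY tau + dZ tau * dZ tau).
  set (G := fun tau => En tau * exp (- c * (tau - x0))).
  set (Gd := fun tau => ((2 * dY tau * dZ tau + 2 * dZ tau * dF tau) - c * En tau) * exp (- c * (tau - x0))).
  assert (HdG : forall tau, is_derive G tau (Gd tau)).
  { intros tau.
    assert (HdY : is_derive dY tau (dZ tau)) by (apply der_minus; [apply H1| apply H2]).
    assert (HdZ : is_derive dZ tau (dF tau)) by (apply der_minus; [apply H1| apply H2]).
    assert (HE : is_derive En tau (dZ tau * dY tau + dY tau * dZ tau + (dF tau * dZ tau + dZ tau * dF tau)))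
      by (apply der_plus; apply der_mult; auto).
    assert (Hex : is_derive (fun tau => exp (- c * (tau - x0))) tau (- c * exp (- c * (tau - x0)))).
    { auto_derive; auto. replace (tau + - x0) with (tau - x0) by ring. ring. }
    refine (der_ext _ _ _ _ _ (fun _ => eq_refl) _ (der_mult _ _ _ _ _ HE Hex)).
    unfold Gd. fold (En tau). simpl. ring. }
  assert (HGd : forall tau, Gd tau <= 0).
  { intros tau. unfold Gd. apply Rmult_le_0_r; [|left; apply exp_pos].
    specialize (HFL tau (Y1 tau) (Y2 tau)). fold (dF tau) (dY tau) in HFL.
    assert (A : 2 * dZ tau * dF tau <= 2 * Rabs (dZ tau) * (Lam * Rabs (dY tau))).
    { apply Rle_trans with (2 * Rabs (dZ tau) * Rabs (dF tau)).
      - assert (dZ tau * dF tau <= Rabs (dZ tau) * Rabs (dF tau)) by (rewrite <- Rabs_mult; apply Rle_abs). lra.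
      - pose proof (Rabs_pos (dZ tau)). apply Rmult_le_compat_l; lra. }
    assert (B : 2 * Rabs (dZ tau) * Rabs (dY tau) <= dY tau * dY tau + dZ tau * dZ tau).
    { pose proof (Rle_0_sqr (Rabs (dZ tau) - Rabs (dY tau))).
      pose proof (Rsqr_abs (dZ tau)). pose proof (Rsqr_abs (dY tau)). unfold Rsqr in *. nra. }
    assert (C : 2 * dY tau * dZ tau <= dY tau * dY tau + dZ tau * dZ tau).
    { pose proof (Rle_0_sqr (dY tau - dZ tau)). unfold Rsqr in *. nra. }
    unfold En, c. nra. }
  destruct (MVT_R G Gd x0 t Ht (fun tau _ => HdG tau)) as [xi [Hxi Heq]].
  assert (HGt : G t <= G x0) by (specialize (HGd xi); nra).
  unfold G in HGt. rewrite Rminus_eq_0, Rmult_0_r, exp_0, Rmult_1_r in HGt.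
  assert (Hexp : exp (- c * (t - x0)) * exp (c * (t - x0)) = 1).
  { rewrite <- exp_plus. replace (- c * (t - x0) + c * (t - x0)) with 0 by ring. apply exp_0. }
  apply Rmult_le_compat_r with (r := exp (c * (t - x0))) in HGt; [|left; apply exp_pos].
  rewrite Rmult_assoc, Hexp, Rmult_1_r in HGt. unfold En, dY, dZ in HGt.
  fold c. simpl. replace ((Y1 t - Y2 t) * ((Y1 t - Y2 t) * 1)) with ((Y1 t - Y2 t) * (Y1 t - Y2 t)) by ring.
  replace ((Z1 t - Z2 t) * ((Z1 t - Z2 t) * 1)) with ((Z1 t - Z2 t) * (Z1 t - Z2 t)) by ring.
  replace ((Y1 x0 - Y2 x0) * ((Y1 x0 - Y2 x0) * 1)) with ((Y1 x0 - Y2 x0) * (Y1 x0 - Y2 x0)) by ring.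
  replace ((Z1 x0 - Z2 x0) * ((Z1 x0 - Z2 x0) * 1)) with ((Z1 x0 - Z2 x0) * (Z1 x0 - Z2 x0)) by ring.
  exact HGt.
Qed.

Lemma stay_neg (u u1 u2 : R -> R) x0 :
  (forall t, x0 <= t -> is_derive u t (u1 t) /\ is_derive u1 t (u2 t)) ->
  0 <= u x0 -> (forall t, x0 < t -> u t < 0 -> u2 t < 0) ->
  forall t1 t2, x0 < t1 <= t2 -> u t1 < 0 -> u t2 < 0.
Proof.
  intros Hd H0 Hneg t1 t2 Ht Hu1.
  destruct (Rlt_le_dec (u t2) 0) as [|Hge]; auto. exfalso.
  destruct (continuity_ab_min u x0 t2) as [tm [Hmin Htm]]; [lra| |].
  { intros c Hc. apply continuity_pt_filterlim. apply (deriv_cont u c (u1 c)). apply Hd; lra. }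
  assert (Hum : u tm <= u t1) by (apply Hmin; lra).
  assert (tm <> x0) by (intro; subst; lra).
  assert (tm <> t2) by (intro; subst; lra).
  assert (Hin : x0 < tm < t2) by lra.
  assert (Hz : u1 tm = 0).
  { apply (deriv_min0 u tm (u1 tm) (Rmin (tm - x0) (t2 - tm))).
    - apply Rmin_pos; lra.
    - apply Hd; lra.
    - intros t Ht'. apply Hmin.
      pose proof (Rmin_l (tm - x0) (t2 - tm)). pose proof (Rmin_r (tm - x0) (t2 - tm)).
      apply Rabs_def2 in Ht'. lra. }
  destruct (loc_strict_max u u1 tm (t2 - tm) (u2 tm)) with (del := t2 - tm) as [t [Ht1 Ht2]].
  - lra.
  - intros t Ht'. apply Hd; lra.
  - auto.
  - apply Hd; lra.
  - apply Hneg; lra.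
  - lra.
  - specialize (Hmin t ltac:(lra)). lra.
Qed.

Lemma connect (A B : R -> Prop) sA sB :
  A sA -> B sB -> sA <= sB ->
  (forall s, A s -> exists e, 0 < e /\ forall s', Rabs (s' - s) < e -> A s') ->
  (forall s, B s -> exists e, 0 < e /\ forall s', Rabs (s' - s) < e -> B s') ->
  (forall s, A s -> B s -> False) ->
  exists s, ~ A s /\ ~ B s.
Proof.
  intros HA HB Hle HoA HoB Hdis.
  set (S := fun s => s <= sB /\ A s).
  destruct (completeness S) as [m [Hub Hlub]].
  { exists sB. intros x [Hx _]. lra. }
  { exists sA. split; auto. }
  assert (HmB : m <= sB) by (apply Hlub; intros x [Hx _]; lra).
  assert (HmA : sA <= m) by (apply Hub; split; auto).
  exists m. split.
  - intros Am.
    assert (m <> sB) by (intro; subst; eapply Hdis; eauto).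
    destruct (HoA m Am) as [e [He He2]].
    set (s' := m + Rmin e (sB - m) / 2).
    assert (0 < Rmin e (sB - m)) by (apply Rmin_pos; lra).
    assert (Rmin e (sB - m) <= e) by apply Rmin_l.
    assert (Rmin e (sB - m) <= sB - m) by apply Rmin_r.
    assert (S s').
    { split; [unfold s'; lra|]. apply He2. unfold s'. rewrite Rabs_right; lra. }
    specialize (Hub s' H3). unfold s' in Hub. lra.
  - intros Bm.
    destruct (HoB m Bm) as [e [He He2]].
    destruct (classic (exists x, S x /\ m - e < x)) as [[x [[Hx1 Hx2] Hx3]]|Hno].
    + assert (x <= m) by (apply Hub; split; auto).
      apply (Hdis x Hx2). apply He2. rewrite Rabs_left1 by lra. lra.
    + assert (m <= m - e).
      { apply Hlub. intros x Hx. destruct (Rle_dec x (m - e)) as [|Hn]; auto.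
        exfalso. apply Hno. exists x. split; auto. lra. }
      lra.
Qed.

Lemma cont_Rabs_comp {U : UniformSpace} (u : U -> R) x : continuous u x -> continuous (fun y => Rabs (u y)) x.
Proof.
  intros H. apply (continuous_comp u Rabs). auto. apply continuity_pt_filterlim. apply Rcontinuity_abs.
Qed.

Lemma cont_Rmax {U : UniformSpace} (u v : U -> R) x : continuous u x -> continuous v x ->
  continuous (fun y => Rmax (u y) (v y)) x.
Proof.
  intros Hu Hv.
  apply (continuous_ext (fun y => (u y + v y + Rabs (u y - v y)) * / 2)).
  { intros y. unfold Rmax. destruct (Rle_dec (u y) (v y)); unfold Rabs; destruct (Rcase_abs (u y - v y)); lra. }
  apply (continuous_mult (K:=R_AbsRing) (fun y => u y + v y + Rabs (u y - v y)) (fun _ => / 2)).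
  2: apply continuous_const.
  apply (continuous_plus (K:=R_AbsRing) (V:=R_NormedModule) (fun y => u y + v y) (fun y => Rabs (u y - v y))).
  - apply (continuous_plus (K:=R_AbsRing) (V:=R_NormedModule) u v); auto.
  - apply cont_Rabs_comp. apply (continuous_minus (K:=R_AbsRing) (V:=R_NormedModule) u v); auto.
Qed.

Lemma cont_Rmin {U : UniformSpace} (u v : U -> R) x : continuous u x -> continuous v x ->
  continuous (fun y => Rmin (u y) (v y)) x.
Proof.
  intros Hu Hv.
  apply (continuous_ext (fun y => (u y + v y - Rabs (u y - v y)) * / 2)).
  { intros y. unfold Rmin. destruct (Rle_dec (u y) (v y)); unfold Rabs; destruct (Rcase_abs (u y - v y)); lra. }
  apply (continuous_mult (K:=R_AbsRing) (fun y => u y + v y - Rabs (u y - v y)) (fun _ => / 2)).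
  2: apply continuous_const.
  apply (continuous_minus (K:=R_AbsRing) (V:=R_NormedModule) (fun y => u y + v y) (fun y => Rabs (u y - v y))).
  - apply (continuous_plus (K:=R_AbsRing) (V:=R_NormedModule) u v); auto.
  - apply cont_Rabs_comp. apply (continuous_minus (K:=R_AbsRing) (V:=R_NormedModule) u v); auto.
Qed.

Lemma cont_fst (p : R * R) : continuous (fun q : R * R => fst q) p.
Proof. destruct p. apply continuous_fst. Qed.
Lemma cont_snd (p : R * R) : continuous (fun q : R * R => snd q) p.
Proof. destruct p. apply continuous_snd. Qed.

Lemma sq_lt x e : Rabs x < e -> x ^ 2 < e ^ 2.
Proof. intros H. apply Rabs_def2 in H. simpl. nra. Qed.
Lemma sq_lt_inv x d : 0 < d -> x ^ 2 < d ^ 2 -> Rabs x < d.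
Proof. intros Hd H. simpl in H. unfold Rabs. destruct (Rcase_abs x); nra. Qed.

Lemma part1 (f : R -> R -> R) (x0 : R) (alpha beta alpha1 alpha2 beta1 beta2 : R -> R) (a b K Lam : R)
  (Hfc : forall p : R * R, continuous (fun q : R * R => f (fst q) (snd q)) p)
  (HfK : forall x y, a <= y <= b -> Rabs (f x y) <= K)
  (HfL : forall x y1 y2, a <= y1 <= b -> a <= y2 <= b -> Rabs (f x y1 - f x y2) <= Lam * Rabs (y1 - y2))
  (HLam : 0 <= Lam)
  (Had : twice_diff_from x0 alpha alpha1 alpha2)
  (Hbd : twice_diff_from x0 beta beta1 beta2)
  (H1 : forall x, x0 < x -> alpha x < beta x)
  (H2a : forall x, x0 < x -> alpha2 x > f x (alpha x))
  (H2b : forall x, x0 < x -> beta2 x < f x (beta x))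
  (Ha : forall x, x0 <= x -> a <= alpha x)
  (Hb : forall x, x0 <= x -> beta x <= b) :
  exists phi phi1 : R -> R,
    solution_from f x0 phi phi1 /\ (forall x, x0 < x -> alpha x < phi x < beta x) /\
    phi x0 = alpha x0 /\ alpha x0 <= beta x0.
Proof.
  assert (Hab0 : alpha x0 <= beta x0).
  { destruct (Rle_dec (alpha x0) (beta x0)) as [|Hn]; auto. exfalso.
    assert (Hc : continuous (fun t => alpha t - beta t) x0).
    { apply cont_minus.
      - apply (deriv_cont _ _ _ (proj1 (Had x0 (Rle_refl _)))).
      - apply (deriv_cont _ _ _ (proj1 (Hbd x0 (Rle_refl _)))). }
    destruct (proj1 (cont_eps _ x0) Hc (alpha x0 - beta x0)) as [d [Hd Hd2]]; [lra|].
    specialize (Hd2 (x0 + d/2)). replace (x0 + d / 2 - x0) with (d/2) in Hd2 by ring.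
    rewrite Rabs_right in Hd2 by lra. specialize (Hd2 ltac:(lra)).
    specialize (H1 (x0 + d/2) ltac:(lra)). apply Rabs_def2 in Hd2. lra. }
  set (al := fun t => alpha (Rmax t x0)). set (be := fun t => beta (Rmax t x0)).
  assert (Hal : forall t, x0 <= t -> al t = alpha t) by (intros; unfold al; rewrite Rmax_left; lra).
  assert (Hbe : forall t, x0 <= t -> be t = beta t) by (intros; unfold be; rewrite Rmax_left; lra).
  assert (Halbe : forall t, al t <= be t).
  { intros t. unfold al, be. pose proof (Rmax_r t x0) as Hm.
    destruct (Rle_lt_or_eq_dec _ _ Hm) as [Hlt|Heq].
    - left. apply H1. auto.
    - rewrite <- Heq. auto. }
  assert (Hala : forall t, a <= al t) by (intros; apply Ha; apply Rmax_r).
  assert (Hbeb : forall t, be t <= b) by (intros; apply Hb; apply Rmax_r).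
  set (clamp := fun t y => Rmax (al t) (Rmin y (be t))).
  assert (Hcl : forall t y, al t <= clamp t y <= be t).
  { intros t y. specialize (Halbe t). unfold clamp, Rmax, Rmin.
    destruct (Rle_dec y (be t)); destruct (Rle_dec (al t) _); lra. }
  assert (Hclab : forall t y, a <= clamp t y <= b).
  { intros t y. specialize (Hcl t y). specialize (Hala t). specialize (Hbeb t). lra. }
  assert (HclL : forall t y1 y2, Rabs (clamp t y1 - clamp t y2) <= Rabs (y1 - y2)).
  { intros t y1 y2. unfold clamp, Rmax, Rmin.
    destruct (Rle_dec y1 (be t)); destruct (Rle_dec y2 (be t));
      repeat match goal with |- context [Rle_dec ?x ?y] => destruct (Rle_dec x y) end;
      unfold Rabs; repeat destruct Rcase_abs; lra. }
  assert (Hclid : forall t y, al t <= y <= be t -> clamp t y = y).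
  { intros t y Hy. unfold clamp. rewrite Rmin_left by lra. rewrite Rmax_right by lra. auto. }
  assert (Hcllo : forall t y, y <= al t -> clamp t y = al t).
  { intros t y Hy. specialize (Halbe t). unfold clamp. rewrite Rmin_left by lra. rewrite Rmax_left by lra. auto. }
  assert (Hclhi : forall t y, be t <= y -> clamp t y = be t).
  { intros t y Hy. specialize (Halbe t). unfold clamp. rewrite Rmin_right by lra. rewrite Rmax_right by lra. auto. }
  set (F := fun t y => f t (clamp t y)).
  assert (HFK : forall t y, Rabs (F t y) <= K) by (intros; apply HfK; auto).
  assert (HFL : forall t y1 y2, Rabs (F t y1 - F t y2) <= Lam * Rabs (y1 - y2)).
  { intros t y1 y2. eapply Rle_trans; [apply HfL; auto|]. apply Rmult_le_compat_l; auto. }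
  assert (HFc : forall p : R * R, continuous (fun q : R * R => F (fst q) (snd q)) p).
  { intros p. unfold F.
    apply (continuous_comp_2 (fun q : R * R => fst q) (fun q : R * R => clamp (fst q) (snd q)) f p).
    - apply cont_fst.
    - unfold clamp. apply cont_Rmax; [|apply cont_Rmin; [apply cont_snd|]].
      + unfold al. apply (continuous_comp (fun q : R * R => Rmax (fst q) x0) alpha).
        * apply cont_Rmax; [apply cont_fst| apply continuous_const].
        * apply (deriv_cont _ _ _ (proj1 (Had _ (Rmax_r _ _)))).
      + unfold be. apply (continuous_comp (fun q : R * R => Rmax (fst q) x0) beta).
        * apply cont_Rmax; [apply cont_fst| apply continuous_const].
        * apply (deriv_cont _ _ _ (proj1 (Hbd _ (Rmax_r _ _)))).
    - apply Hfc. }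
  assert (HK : 0 <= K) by (pose proof (HfK x0 a ltac:(specialize (Ha x0 (Rle_refl _)); specialize (Hb x0 (Rle_refl _)); lra)); pose proof (Rabs_pos (f x0 a)); lra).
  set (Sol := fun s (Y Z : R -> R) => (forall t, is_derive Y t (Z t) /\ is_derive Z t (F t (Y t))) /\ Y x0 = alpha x0 /\ Z x0 = s).
  assert (Hex : forall s, exists Y Z, Sol s Y Z) by (intros s; apply (picard_exists F K Lam HFc HFK HFL HLam)).
  assert (Hdep := dep_bound F Lam HFL HLam).
  assert (Hstay_a : forall s Y Z, Sol s Y Z -> forall t1 t2, x0 < t1 <= t2 -> Y t1 < alpha t1 -> Y t2 < alpha t2).
  { intros s Y Z [HS [HY0 HZ0]] t1 t2 Ht Hlt.
    assert (Y t2 - alpha t2 < 0); [|lra].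
    apply (stay_neg (fun t => Y t - alpha t) (fun t => Z t - alpha1 t) (fun t => F t (Y t) - alpha2 t) x0) with t1; auto; [| | |lra].
    - intros t Ht'. split; apply der_minus; try apply HS; apply Had; auto.
    - lra.
    - intros t Ht' Hneg. unfold F. rewrite Hcllo by (rewrite Hal; lra). rewrite Hal by lra.
      specialize (H2a t Ht'). lra. }
  assert (Hstay_b : forall s Y Z, Sol s Y Z -> forall t1 t2, x0 < t1 <= t2 -> beta t1 < Y t1 -> beta t2 < Y t2).
  { intros s Y Z [HS [HY0 HZ0]] t1 t2 Ht Hlt.
    assert (beta t2 - Y t2 < 0); [|lra].
    apply (stay_neg (fun t => beta t - Y t) (fun t => beta1 t - Z t) (fun t => beta2 t - F t (Y t)) x0) with t1; auto; [| | |lra].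
    - intros t Ht'. split; apply der_minus; try apply HS; apply Hbd; auto.
    - lra.
    - intros t Ht' Hneg. unfold F. rewrite Hclhi by (rewrite Hbe; lra). rewrite Hbe by lra.
      specialize (H2b t Ht'). lra. }
  assert (Huniq : forall s Y Z Y' Z', Sol s Y Z -> Sol s Y' Z' -> forall t, x0 <= t -> Y t = Y' t).
  { intros s Y Z Y' Z' [HS [HY0 HZ0]] [HS' [HY0' HZ0']] t Ht.
    specialize (Hdep Y Z Y' Z' HS HS' x0 t Ht). rewrite HY0, HY0', HZ0, HZ0' in Hdep.
    rewrite !Rminus_eq_0 in Hdep. simpl in Hdep. rewrite Rmult_0_l, Rplus_0_l, Rmult_0_l in Hdep.
    pose proof (pow2_ge_0 (Z t - Z' t)). pose proof (pow2_ge_0 (Y t - Y' t)). simpl in *. nra. }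
  set (A := fun s => exists Y Z, Sol s Y Z /\ exists t, x0 < t /\ Y t < alpha t).
  set (B := fun s => exists Y Z, Sol s Y Z /\ exists t, x0 < t /\ beta t < Y t).
  assert (Hdis : forall s, A s -> B s -> False).
  { intros s [Y [Z [HS [t1 [Ht1 Hl1]]]]] [Y' [Z' [HS' [t2 [Ht2 Hl2]]]]].
    set (t := Rmax t1 t2).
    assert (t1 <= t) by apply Rmax_l. assert (t2 <= t) by apply Rmax_r.
    assert (Y t < alpha t) by (apply (Hstay_a s Y Z HS t1); auto; lra).
    assert (beta t < Y' t) by (apply (Hstay_b s Y' Z' HS' t2); auto; lra).
    assert (Y t = Y' t) by (apply (Huniq s Y Z Y' Z'); auto; lra).
    specialize (H1 t ltac:(lra)). lra. }
  set (c := 1 + Lam).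
  assert (Hopen : forall s Y Z t1, Sol s Y Z -> x0 < t1 -> forall d, 0 < d ->
            exists e, 0 < e /\ forall s', Rabs (s' - s) < e -> exists Y' Z', Sol s' Y' Z' /\ Rabs (Y' t1 - Y t1) < d).
  { intros s Y Z t1 HS Ht1 d Hd.
    exists (d * exp (- c * (t1 - x0) / 2)). split; [apply Rmult_lt_0_compat; auto; apply exp_pos|].
    intros s' Hs'. destruct (Hex s') as [Y' [Z' HS']]. exists Y', Z'. split; auto.
    pose proof (Hdep Y' Z' Y Z (proj1 HS') (proj1 HS) x0 t1 ltac:(lra)) as Hd2.
    destruct HS as [_ [HY0 HZ0]]. destruct HS' as [_ [HY0' HZ0']].
    rewrite HY0, HY0', HZ0, HZ0', Rminus_eq_0 in Hd2.
    apply sq_lt_inv; auto.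
    pose proof (sq_lt _ _ Hs') as Hsq.
    assert (Hexp : (d * exp (- c * (t1 - x0) / 2)) ^ 2 * exp (c * (t1 - x0)) = d ^ 2).
    { simpl. replace (d * exp (- c * (t1 - x0) / 2) * (d * exp (- c * (t1 - x0) / 2) * 1) * exp (c * (t1 - x0)))
        with (d * d * (exp (- c * (t1 - x0) / 2) * exp (- c * (t1 - x0) / 2) * exp (c * (t1 - x0)))) by ring.
      rewrite <- !exp_plus. replace (- c * (t1 - x0) / 2 + - c * (t1 - x0) / 2 + c * (t1 - x0)) with 0 by field.
      rewrite exp_0. ring. }
    pose proof (exp_pos (c * (t1 - x0))).
    pose proof (pow2_ge_0 (Z' t1 - Z t1)).
    simpl in Hd2, Hexp, Hsq |- *. fold c in Hd2. nra. }
  assert (HoA : forall s, A s -> exists e, 0 < e /\ forall s', Rabs (s' - s) < e -> A s').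
  { intros s [Y [Z [HS [t1 [Ht1 Hl1]]]]].
    destruct (Hopen s Y Z t1 HS Ht1 (alpha t1 - Y t1) ltac:(lra)) as [e [He He2]].
    exists e. split; auto. intros s' Hs'. destruct (He2 s' Hs') as [Y' [Z' [HS' Hd]]].
    exists Y', Z'. split; auto. exists t1. split; auto. apply Rabs_def2 in Hd. lra. }
  assert (HoB : forall s, B s -> exists e, 0 < e /\ forall s', Rabs (s' - s) < e -> B s').
  { intros s [Y [Z [HS [t1 [Ht1 Hl1]]]]].
    destruct (Hopen s Y Z t1 HS Ht1 (Y t1 - beta t1) ltac:(lra)) as [e [He He2]].
    exists e. split; auto. intros s' Hs'. destruct (He2 s' Hs') as [Y' [Z' [HS' Hd]]].
    exists Y', Z'. split; auto. exists t1. split; auto. apply Rabs_def2 in Hd. lra. }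
  assert (Hlin : forall s Y Z, Sol s Y Z -> Rabs (Y (x0 + 1) - alpha x0 - s) <= K).
  { intros s Y Z [HS [HY0 HZ0]].
    assert (HZb : forall t, Rabs (t - x0) <= 1 -> Rabs (Z t - s) <= K).
    { intros t Ht. rewrite <- HZ0.
      eapply Rle_trans; [apply (bounded_variation Z (fun t => F t (Y t)) K x0 t)|].
      - intros tau _. split; [apply HS| apply HFK].
      - rewrite Rmult_comm. rewrite <- (Rmult_1_l K) at 2. apply Rmult_le_compat_r; auto. }
    pose proof (bounded_variation (fun t => Y t - s * t) (fun t => Z t - s) K x0 (x0 + 1)) as Hbv.
    replace (x0 + 1 - x0) with 1 in Hbv by ring. rewrite Rabs_R1, Rmult_1_r in Hbv.
    replace (Y (x0 + 1) - alpha x0 - s) with (Y (x0 + 1) - s * (x0 + 1) - (Y x0 - s * x0)) by (rewrite HY0; ring).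
    apply Hbv. intros t Ht. split; [|apply HZb; auto].
    apply der_minus; [apply HS|]. apply (der_ext (fun t => s * t) _ _ (s * 1)); [intros; reflexivity| apply Rmult_1_r|].
    apply is_derive_scal. apply (is_derive_id (K:=R_AbsRing)). }
  set (sA := alpha (x0 + 1) - alpha x0 - K - 1).
  set (sB := beta (x0 + 1) - alpha x0 + K + 1).
  assert (HAs : A sA).
  { destruct (Hex sA) as [Y [Z HS]]. exists Y, Z. split; auto. exists (x0 + 1). split; [lra|].
    specialize (Hlin _ _ _ HS). apply Rabs_le_between in Hlin. unfold sA in Hlin. lra. }
  assert (HBs : B sB).
  { destruct (Hex sB) as [Y [Z HS]]. exists Y, Z. split; auto. exists (x0 + 1). split; [lra|].
    specialize (Hlin _ _ _ HS). apply Rabs_le_between in Hlin. unfold sB in Hlin. lra. }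
  assert (HsAB : sA <= sB) by (unfold sA, sB; specialize (H1 (x0 + 1) ltac:(lra)); lra).
  destruct (connect A B sA sB HAs HBs HsAB HoA HoB Hdis) as [s [HnA HnB]].
  destruct (Hex s) as [Y [Z HS]].
  assert (HYin : forall t, x0 < t -> alpha t <= Y t <= beta t).
  { intros t Ht. split.
    - destruct (Rle_dec (alpha t) (Y t)) as [|Hn]; auto. exfalso. apply HnA. exists Y, Z. split; auto. exists t. split; auto. lra.
    - destruct (Rle_dec (Y t) (beta t)) as [|Hn]; auto. exfalso. apply HnB. exists Y, Z. split; auto. exists t. split; auto. lra. }
  destruct HS as [HS [HY0 HZ0]].
  assert (HFY : forall t, x0 <= t -> F t (Y t) = f t (Y t)).
  { intros t Ht. unfold F. rewrite Hclid; auto. rewrite Hal, Hbe by auto.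
    destruct (Rle_lt_or_eq_dec _ _ Ht) as [Hlt|<-]; [apply HYin; auto| rewrite HY0; lra]. }
  exists Y, Z. split; [|split; [|split; auto]].
  - intros t Ht. split; [apply HS|]. rewrite <- HFY by auto. apply HS.
  - intros t Ht. split.
    + destruct (Rle_lt_or_eq_dec _ _ (proj1 (HYin t Ht))) as [|Heq]; auto. exfalso.
      assert (Hz : Z t - alpha1 t = 0).
      { apply (deriv_min0 (fun t => Y t - alpha t) t _ (t - x0)); [lra| apply der_minus; [apply HS| apply Had; lra]|].
        intros tau Htau. apply Rabs_def2 in Htau. specialize (HYin tau ltac:(lra)). lra. }
      destruct (loc_strict_max (fun t => Y t - alpha t) (fun t => Z t - alpha1 t) t 1 (F t (Y t) - alpha2 t))
        with (del := 1) as [tau [Htau1 Htau2]]; auto; try lra.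
      * intros tau Htau. apply der_minus; [apply HS| apply Had; lra].
      * apply der_minus; [apply HS| apply Had; lra].
      * rewrite HFY by lra. rewrite <- Heq. specialize (H2a t Ht). lra.
      * specialize (HYin tau ltac:(lra)). lra.
    + destruct (Rle_lt_or_eq_dec _ _ (proj2 (HYin t Ht))) as [|Heq]; auto. exfalso.
      assert (Hz : beta1 t - Z t = 0).
      { apply (deriv_min0 (fun t => beta t - Y t) t _ (t - x0)); [lra| apply der_minus; [apply Hbd; lra| apply HS]|].
        intros tau Htau. apply Rabs_def2 in Htau. specialize (HYin tau ltac:(lra)). lra. }
      destruct (loc_strict_max (fun t => beta t - Y t) (fun t => beta1 t - Z t) t 1 (beta2 t - F t (Y t)))
        with (del := 1) as [tau [Htau1 Htau2]]; auto; try lra.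
      * intros tau Htau. apply der_minus; [apply Hbd; lra| apply HS].
      * apply der_minus; [apply Hbd; lra| apply HS].
      * rewrite HFY by lra. rewrite Heq. specialize (H2b t Ht). lra.
      * specialize (HYin tau ltac:(lra)). lra.
Qed.

Lemma der_exp_lin (k A tau : R) : is_derive (fun t => exp (k * (t - A))) tau (k * exp (k * (tau - A))).
Proof. auto_derive; auto. replace (tau + - A) with (tau - A) by ring. ring. Qed.
Lemma der_exp_lin2 (k T tau : R) : is_derive (fun t => exp (k * (T - t))) tau (- k * exp (k * (T - tau))).
Proof. auto_derive; auto. replace (T + - tau) with (T - tau) by ring. ring. Qed.

Lemma decay (f : R -> R -> R) a b m (Hm : 0 < m)
  (Hmono : forall t y1 y2, a <= y1 <= b -> a <= y2 <= b -> m * (y1 - y2)^2 <= (f t y1 - f t y2) * (y1 - y2))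
  (y1 z1 y2 z2 : R -> R) A :
  (forall t, A <= t -> is_derive y1 t (z1 t) /\ is_derive z1 t (f t (y1 t))) ->
  (forall t, A <= t -> is_derive y2 t (z2 t) /\ is_derive z2 t (f t (y2 t))) ->
  (forall t, A <= t -> a <= y1 t <= b) -> (forall t, A <= t -> a <= y2 t <= b) ->
  forall x, A <= x -> Rabs (y1 x - y2 x) <= (b - a) * exp (- (Rmin 1 m) * (x - A) / 2).
Proof.
  intros Hs1 Hs2 Hb1 Hb2 x Hx.
  set (k := Rmin 1 m).
  assert (Hk : 0 < k) by (unfold k; apply Rmin_pos; lra).
  assert (Hk1 : k <= 1) by apply Rmin_l. assert (Hkm : k <= m) by apply Rmin_r.
  assert (Hkk : k * k <= 2 * m) by nra.
  set (M := (b - a) * (b - a)).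
  assert (Hba : 0 <= b - a) by (specialize (Hb1 A (Rle_refl _)); lra).
  assert (HM : 0 <= M) by (unfold M; nra).
  set (w := fun t => y1 t - y2 t).
  assert (Hw : forall t, A <= t -> w t * w t <= M).
  { intros t Ht. specialize (Hb1 t Ht). specialize (Hb2 t Ht). unfold w, M. nra. }
  assert (Hmain : forall T, x <= T -> w x * w x <= M * exp (- k * (x - A)) + M * exp (- k * (T - x))).
  { intros T HT.
    set (e1 := fun t => exp (- k * (t - A))). set (e2 := fun t => exp (- k * (T - t))).
    set (h := fun t => w t * w t - M * (e1 t + e2 t)).
    set (h1 := fun t => 2 * (w t * (z1 t - z2 t)) - M * (- k * e1 t + k * e2 t)).
    set (h2 := fun t => 2 * ((z1 t - z2 t) * (z1 t - z2 t)) + 2 * (w t * (f t (y1 t) - f t (y2 t)))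
                        - M * (k * k * e1 t + k * k * e2 t)).
    assert (Hd : forall t, A <= t -> is_derive h t (h1 t) /\ is_derive h1 t (h2 t)).
    { intros t Ht.
      assert (Hw' : is_derive w t (z1 t - z2 t)) by (apply der_minus; [apply Hs1| apply Hs2]; auto).
      assert (Hw1' : is_derive (fun t => z1 t - z2 t) t (f t (y1 t) - f t (y2 t))) by (apply der_minus; [apply Hs1| apply Hs2]; auto).
      assert (He1 := der_exp_lin (- k) A t). assert (He2 := der_exp_lin2 (- k) T t).
      fold (e1 t) in He1. fold (e2 t) in He2. change (fun t => exp (- k * (t - A))) with e1 in He1.
      change (fun t => exp (- k * (T - t))) with e2 in He2.
      split.
      - refine (der_ext _ _ _ _ _ (fun _ => eq_refl) _
                  (der_minus _ _ _ _ _ (der_mult _ _ _ _ _ Hw' Hw') (is_derive_scal _ _ M _ (der_plus _ _ _ _ _ He1 He2)))).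
        unfold h1. ring.
      - assert (He1' : is_derive (fun t => - k * e1 t) t (- k * (- k * e1 t))) by (apply is_derive_scal; auto).
        assert (He2' : is_derive (fun t => k * e2 t) t (k * (- - k * e2 t))) by (apply is_derive_scal; auto).
        refine (der_ext _ _ _ _ _ (fun _ => eq_refl) _
                  (der_minus _ _ _ _ _ (is_derive_scal _ _ 2 _ (der_mult _ _ _ _ _ Hw' Hw1'))
                     (is_derive_scal _ _ M _ (der_plus _ _ _ _ _ He1' He2')))).
        unfold h2. ring. }
    assert (Hgoal : h x <= 0).
    { destruct (continuity_ab_maj h A T) as [tm [Hmax Htm]]; [lra| |].
      { intros c Hc. apply continuity_pt_filterlim. apply (deriv_cont h c (h1 c)). apply Hd; lra. }
      destruct (Rle_dec (h tm) 0) as [Hle|Hgt].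
      { eapply Rle_trans; [apply Hmax; lra| auto]. }
      exfalso. apply Rnot_le_lt in Hgt.
      assert (He1p : forall t, 0 < e1 t) by (intros; apply exp_pos).
      assert (He2p : forall t, 0 < e2 t) by (intros; apply exp_pos).
      assert (tm <> A).
      { intro E. subst tm. unfold h in Hgt. unfold e1 in Hgt. rewrite Rminus_eq_0, Rmult_0_r, exp_0 in Hgt.
        specialize (Hw A (Rle_refl _)). specialize (He2p A). nra. }
      assert (tm <> T).
      { intro E. subst tm. unfold h in Hgt. unfold e2 in Hgt. rewrite Rminus_eq_0, Rmult_0_r, exp_0 in Hgt.
        specialize (Hw T ltac:(lra)). specialize (He1p T). nra. }
      assert (Hin : A < tm < T) by lra.
      assert (Hz : h1 tm = 0).
      { apply (deriv_max0 h tm (h1 tm) (Rmin (tm - A) (T - tm))).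
        - apply Rmin_pos; lra.
        - apply Hd; lra.
        - intros t Ht'. apply Hmax.
          pose proof (Rmin_l (tm - A) (T - tm)). pose proof (Rmin_r (tm - A) (T - tm)).
          apply Rabs_def2 in Ht'. lra. }
      assert (Hpos : 0 < h2 tm).
      { unfold h2. pose proof (Hmono tm (y1 tm) (y2 tm) ltac:(apply Hb1; lra) ltac:(apply Hb2; lra)) as Hmo.
        fold (w tm) in Hmo. unfold h in Hgt.
        pose proof (Rle_0_sqr (z1 tm - z2 tm)). unfold Rsqr in *. simpl in Hmo.
        assert (0 <= w tm * w tm) by nra.
        assert (k * k * (w tm * w tm) <= 2 * m * (w tm * w tm)) by nra.
        assert (0 < k * k * (w tm * w tm - M * (e1 tm + e2 tm))) by (apply Rmult_lt_0_compat; nra).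
        nra. }
      destruct (loc_strict_min h h1 tm (T - tm) (h2 tm)) with (del := T - tm) as [t [Ht1 Ht2]]; try lra.
      - intros t Ht. apply Hd; lra.
      - apply Hd; lra.
      - specialize (Hmax t ltac:(lra)). lra. }
    unfold h, e1, e2 in Hgoal. lra. }
  assert (Hsq : w x * w x <= M * exp (- k * (x - A))).
  { destruct (Rle_dec (w x * w x) (M * exp (- k * (x - A)))) as [|Hn]; auto. exfalso.
    apply Rnot_le_lt in Hn.
    set (eps := w x * w x - M * exp (- k * (x - A))).
    assert (Heps : 0 < eps) by (unfold eps; lra).
    specialize (Hmain (x + M / (k * eps)) ltac:(assert (0 <= M / (k * eps)) by (apply Rdiv_le_0_compat; nra); lra)).
    replace (- k * (x + M / (k * eps) - x)) with (- (M / eps)) in Hmain by (field; lra).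
    assert (Hy : M * exp (- (M / eps)) < eps).
    { assert (E : exp (- (M / eps)) * exp (M / eps) = 1) by (rewrite <- exp_plus; replace (- (M / eps) + M / eps) with 0 by ring; apply exp_0).
      pose proof (exp_ineq1_le (M / eps)). pose proof (exp_pos (M / eps)). pose proof (exp_pos (- (M / eps))).
      assert (M < eps * exp (M / eps)).
      { assert (eps * (1 + M / eps) = eps + M) by (field; lra). nra. }
      nra. }
    assert (eps = w x * w x - M * exp (- k * (x - A))) by reflexivity. lra. }
  assert (HR : 0 <= (b - a) * exp (- k * (x - A) / 2)) by (apply Rmult_le_pos; auto; left; apply exp_pos).
  assert (HR2 : ((b - a) * exp (- k * (x - A) / 2)) * ((b - a) * exp (- k * (x - A) / 2)) = M * exp (- k * (x - A))).
  { unfold M. replace ((b - a) * exp (- k * (x - A) / 2) * ((b - a) * exp (- k * (x - A) / 2))) with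
      ((b - a) * (b - a) * (exp (- k * (x - A) / 2) * exp (- k * (x - A) / 2))) by ring.
    rewrite <- exp_plus. f_equal. f_equal. field. }
  fold w. destruct (Rle_dec (Rabs (w x)) ((b - a) * exp (- k * (x - A) / 2))) as [|Hn]; auto. exfalso.
  apply Rnot_le_lt in Hn.
  assert (Rabs (w x) * Rabs (w x) = w x * w x) by (rewrite <- Rabs_mult; apply Rabs_right; nra).
  nra.
Qed.

Lemma dbound (f : R -> R -> R) a b Lam
  (HfL : forall t y1 y2, a <= y1 <= b -> a <= y2 <= b -> Rabs (f t y1 - f t y2) <= Lam * Rabs (y1 - y2))
  (HLam : 0 <= Lam) (y1 z1 y2 z2 : R -> R) A :
  (forall t, A <= t -> is_derive y1 t (z1 t) /\ is_derive z1 t (f t (y1 t))) ->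
  (forall t, A <= t -> is_derive y2 t (z2 t) /\ is_derive z2 t (f t (y2 t))) ->
  (forall t, A <= t -> a <= y1 t <= b) -> (forall t, A <= t -> a <= y2 t <= b) ->
  forall x eps, A <= x -> (forall t, x <= t <= x + 1 -> Rabs (y1 t - y2 t) <= eps) ->
  Rabs (z1 x - z2 x) <= (2 + Lam) * eps.
Proof.
  intros Hs1 Hs2 Hb1 Hb2 x eps Hx Heps.
  destruct (MVT_R (fun t => y1 t - y2 t) (fun t => z1 t - z2 t) x (x + 1)) as [xi [Hxi E1]]; [lra| |].
  { intros t Ht. apply der_minus; [apply Hs1| apply Hs2]; lra. }
  destruct (MVT_R (fun t => z1 t - z2 t) (fun t => f t (y1 t) - f t (y2 t)) x xi) as [eta [Heta E2]]; [lra| |].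
  { intros t Ht. apply der_minus; [apply Hs1| apply Hs2]; lra. }
  assert (B1 : Rabs (z1 xi - z2 xi) <= 2 * eps).
  { replace (z1 xi - z2 xi) with ((y1 (x + 1) - y2 (x + 1)) - (y1 x - y2 x)) by (rewrite E1; ring).
    eapply Rle_trans; [apply Rabs_triang|]. rewrite Rabs_Ropp.
    pose proof (Heps (x + 1) ltac:(lra)). pose proof (Heps x ltac:(lra)). lra. }
  assert (B2 : Rabs (f eta (y1 eta) - f eta (y2 eta)) <= Lam * eps).
  { eapply Rle_trans; [apply HfL; [apply Hb1| apply Hb2]; lra|]. apply Rmult_le_compat_l; auto. apply Heps; lra. }
  assert (B3 : Rabs ((f eta (y1 eta) - f eta (y2 eta)) * (xi - x)) <= Lam * eps).
  { rewrite Rabs_mult. rewrite (Rabs_right (xi - x)) by lra.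
    pose proof (Rabs_pos (f eta (y1 eta) - f eta (y2 eta))).
    apply Rle_trans with (Rabs (f eta (y1 eta) - f eta (y2 eta)) * 1); [apply Rmult_le_compat_l; lra| lra]. }
  replace (z1 x - z2 x) with ((z1 xi - z2 xi) - ((f eta (y1 eta) - f eta (y2 eta)) * (xi - x))) by (rewrite <- E2; ring).
  eapply Rle_trans; [apply Rabs_triang|]. rewrite Rabs_Ropp. lra.
Qed.

Lemma cauchy_rate (u r : nat -> R) : is_lim_seq r 0 -> (forall n j, Rabs (u (n + j)%nat - u n) <= r n) ->
  is_lim_seq u (real (Lim_seq u)) /\ forall n, Rabs (u n - Lim_seq u) <= r n.
Proof.
  intros Hr Hc.
  apply is_lim_seq_spec in Hr.
  assert (Hex : ex_finite_lim_seq u).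
  { apply ex_lim_seq_cauchy_corr. intro eps.
    destruct (Hr (pos_div_2 eps)) as [N HN]. exists N. intros n m Hn Hm.
    specialize (HN N (le_n N)). simpl in HN. rewrite Rminus_0_r in HN. apply Rabs_def2 in HN.
    pose proof (Hc N (n - N)%nat) as A. pose proof (Hc N (m - N)%nat) as B.
    replace (N + (n - N))%nat with n in A by lia. replace (N + (m - N))%nat with m in B by lia.
    replace (u n - u m) with ((u n - u N) - (u m - u N)) by ring.
    eapply Rle_lt_trans; [apply Rabs_triang|]. rewrite Rabs_Ropp. lra. }
  assert (Hl := Lim_seq_correct' u Hex). split; [exact Hl|].
  intros n. destruct (Rle_lt_dec (Rabs (u n - Lim_seq u)) (r n)) as [|Hgt]; auto. exfalso.
  apply is_lim_seq_spec in Hl.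
  destruct (Hl (mkposreal _ (Rlt_Rminus _ _ Hgt))) as [N HN].
  specialize (HN (n + N)%nat ltac:(lia)). simpl in HN. specialize (Hc n N).
  assert (Rabs (u n - Lim_seq u) <= Rabs (u n - u (n + N)%nat) + Rabs (u (n + N)%nat - Lim_seq u)).
  { replace (u n - Lim_seq u) with ((u n - u (n + N)%nat) + (u (n + N)%nat - Lim_seq u)) by ring.
    apply Rabs_triang. }
  rewrite <- Rabs_Ropp in Hc. replace (- (u (n + N)%nat - u n)) with (u n - u (n + N)%nat) in Hc by ring.
  lra.
Qed.

Lemma lim_close (x c : R) (r : nat -> R) : is_lim_seq r 0 -> (forall n, x <= c + r n) -> x <= c.
Proof.
  intros Hr H. destruct (Rle_dec x c) as [|Hn]; auto. exfalso. apply Rnot_le_lt in Hn.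
  apply is_lim_seq_spec in Hr. destruct (Hr (mkposreal _ (Rlt_Rminus _ _ Hn))) as [N HN].
  specialize (HN N (le_n N)). simpl in HN. rewrite Rminus_0_r in HN. apply Rabs_def2 in HN.
  specialize (H N). lra.
Qed.

Lemma exp_seq_lim D c : 0 < c -> is_lim_seq (fun n => D * exp (- c * INR n)) 0.
Proof.
  intros Hc. apply is_lim_seq_spec. intros eps. simpl.
  destruct (INR_unbounded (Rabs D / (c * eps))) as [N HN].
  exists N. intros n Hn. rewrite Rminus_0_r, Rabs_mult, (Rabs_right (exp _)) by (left; apply exp_pos).
  pose proof (le_INR _ _ Hn). pose proof (cond_pos eps).
  assert (HN2 : Rabs D < c * eps * INR N).
  { apply Rmult_lt_compat_l with (r := c * eps) in HN; [|nra].
    replace (c * eps * (Rabs D / (c * eps))) with (Rabs D) in HN by (field; lra). lra. }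
  pose proof (exp_ineq1_le (c * INR n)).
  assert (E : exp (- c * INR n) * exp (c * INR n) = 1).
  { rewrite <- exp_plus. replace (- c * INR n + c * INR n) with 0 by ring. apply exp_0. }
  pose proof (exp_pos (- c * INR n)). pose proof (Rabs_pos D).
  assert (c * INR N <= c * INR n) by (apply Rmult_le_compat_l; lra).
  assert (eps * (c * INR N) <= eps * (c * INR n)) by (apply Rmult_le_compat_l; lra).
  assert (eps * (c * INR n) <= eps * exp (c * INR n)) by (apply Rmult_le_compat_l; lra).
  assert (Rabs D < eps * exp (c * INR n)) by lra.
  nra.
Qed.

Lemma lim_deriv (un vn : nat -> R -> R) (x : R) (r : nat -> R) :
  (forall n y, x - 1 < y < x + 1 -> is_derive (un n) y (vn n y)) ->
  (forall n y, x - 1 < y < x + 1 -> continuous (vn n) y) ->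
  is_lim_seq r 0 ->
  (forall n y, x - 1 < y < x + 1 -> Rabs (un n y - Lim_seq (fun k => un k y)) <= r n) ->
  (forall n y, x - 1 < y < x + 1 -> Rabs (vn n y - Lim_seq (fun k => vn k y)) <= r n) ->
  is_derive (fun y => real (Lim_seq (fun n => un n y))) x (real (Lim_seq (fun n => vn n x))).
Proof.
  intros Hd Hc Hr Hu Hv.
  set (D := fun y => x - 1 < y /\ y < x + 1).
  assert (HDer : forall n y, D y -> Derive (un n) y = vn n y).
  { intros n y Hy. apply is_derive_unique. apply Hd. exact Hy. }
  assert (Hunif : forall (wn : nat -> R -> R), (forall n y, D y -> Rabs (wn n y - Lim_seq (fun k => wn k y)) <= r n) -> CVU_dom wn D).
  { intros wn Hw eps. apply is_lim_seq_spec in Hr. destruct (Hr eps) as [N HN]. exists N. intros n Hn y Hy.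
    specialize (HN n Hn). rewrite Rminus_0_r in HN. eapply Rle_lt_trans; [apply Hw; auto|].
    eapply Rle_lt_trans; [apply Rle_abs| exact HN]. }
  rewrite <- (Lim_seq_ext (fun n => Derive (un n) x)).
  2:{ intros n. apply HDer. unfold D; lra. }
  apply (CVU_Derive un D).
  - apply open_and; [apply open_gt| apply open_lt].
  - intros p q z Hp Hq Hz. unfold D in *. lra.
  - apply Hunif. intros n y Hy. apply Hu. exact Hy.
  - intros n y Hy. exists (vn n y). apply Hd. exact Hy.
  - intros n y Hy. apply (continuity_pt_ext_loc (vn n)).
    + assert (Hpos : 0 < Rmin (y - (x - 1)) (x + 1 - y)) by (destruct Hy; apply Rmin_pos; lra).
      exists (mkposreal _ Hpos). intros z Hz. simpl in Hz. symmetry. apply HDer.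
      unfold ball in Hz; simpl in Hz; unfold AbsRing_ball, abs, minus, plus, opp in Hz; simpl in Hz.
      pose proof (Rmin_l (y - (x - 1)) (x + 1 - y)). pose proof (Rmin_r (y - (x - 1)) (x + 1 - y)).
      apply Rabs_def2 in Hz. unfold D. destruct Hy. lra.
    + apply continuity_pt_filterlim. apply Hc. exact Hy.
  - apply (Hunif (fun n y => Derive (un n) y)). intros n y Hy. rewrite HDer by auto.
    rewrite (Lim_seq_ext _ (fun k => vn k y)) by (intros; apply HDer; auto). apply Hv. exact Hy.
  - unfold D; lra.
Qed.

Lemma shift_der (g : R -> R) c t l : is_derive g (t + c) l -> is_derive (fun t => g (t + c)) t l.
Proof.
  intros H. assert (H2 : is_derive (fun t => t + c) t 1) by (auto_derive; auto; ring).
  pose proof (is_derive_comp g (fun t => t + c) t l 1 H H2) as H3.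
  apply (der_ext _ _ _ _ _ (fun _ => eq_refl) ltac:(simpl; apply Rmult_1_l) H3).
Qed.

Lemma Lim_seq_rate (u r : nat -> R) l : is_lim_seq r 0 -> (forall n, Rabs (u n - l) <= r n) -> Lim_seq u = l.
Proof.
  intros Hr Hu. apply is_lim_seq_unique. apply is_lim_seq_spec. intros eps.
  apply is_lim_seq_spec in Hr. destruct (Hr eps) as [N HN]. exists N. intros n Hn.
  specialize (HN n Hn). rewrite Rminus_0_r in HN. eapply Rle_lt_trans; [apply Hu|].
  eapply Rle_lt_trans; [apply Rle_abs| exact HN].
Qed.

Lemma exp_small C c eps : 0 < c -> 0 < eps -> exists M, forall y, M < y -> C * exp (- c * y) < eps.
Proof.
  intros Hc He. exists (Rabs C / (c * eps)). intros y Hy.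
  assert (0 <= Rabs C / (c * eps)) by (apply Rdiv_le_0_compat; [apply Rabs_pos| nra]).
  assert (HN2 : Rabs C < c * eps * y).
  { apply Rmult_lt_compat_l with (r := c * eps) in Hy; [|nra].
    replace (c * eps * (Rabs C / (c * eps))) with (Rabs C) in Hy by (field; lra). lra. }
  pose proof (exp_ineq1_le (c * y)).
  assert (E : exp (- c * y) * exp (c * y) = 1).
  { rewrite <- exp_plus. replace (- c * y + c * y) with 0 by ring. apply exp_0. }
  pose proof (exp_pos (- c * y)). pose proof (Rabs_pos C). pose proof (Rle_abs C).
  assert (eps * (c * y) <= eps * exp (c * y)) by (apply Rmult_le_compat_l; lra).
  assert (Rabs C < eps * exp (c * y)) by lra.
  assert (C * exp (- c * y) <= Rabs C * exp (- c * y)) by (apply Rmult_le_compat_r; lra).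
  nra.
Qed.

Lemma part2 (f : R -> R -> R) L x0 a b Lam m (HL : 0 < L)
  (Hfc : forall p : R * R, continuous (fun q : R * R => f (fst q) (snd q)) p)
  (Hfper : forall x y, f (x + L) y = f x y)
  (HfL : forall t y1 y2, a <= y1 <= b -> a <= y2 <= b -> Rabs (f t y1 - f t y2) <= Lam * Rabs (y1 - y2))
  (HLam : 0 <= Lam) (Hm : 0 < m)
  (Hmono : forall t y1 y2, a <= y1 <= b -> a <= y2 <= b -> m * (y1 - y2)^2 <= (f t y1 - f t y2) * (y1 - y2))
  (phi phi1 : R -> R) (Hsol : solution_from f x0 phi phi1) (Hin : forall x, x0 <= x -> a <= phi x <= b) :
  exists psi psi1 : R -> R,
    periodic L psi /\ solution f psi psi1 /\
    is_lim (fun x => Rabs (phi x - psi x) + Rabs (phi1 x - psi1 x)) p_infty 0 /\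
    (forall x, a <= psi x <= b) /\
    (forall chi chi1 : R -> R, periodic L chi -> solution f chi chi1 -> (forall x, a <= chi x <= b) ->
       forall x, chi x = psi x).
Proof.
  set (k := Rmin 1 m). assert (Hk : 0 < k) by (unfold k; apply Rmin_pos; lra).
  assert (Hba : a <= b) by (specialize (Hin x0 (Rle_refl _)); lra).
  set (phin := fun (n : nat) t => phi (t + INR n * L)).
  set (phi1n := fun (n : nat) t => phi1 (t + INR n * L)).
  assert (Htr : forall n t, x0 - INR n * L <= t ->
             is_derive (phin n) t (phi1n n t) /\ is_derive (phi1n n) t (f t (phin n t))).
  { intros n t Ht. split.
    - apply shift_der. apply Hsol. lra.
    - unfold phin. rewrite <- (per_nat f L Hfper n t). apply (shift_der phi1 (INR n * L)). apply Hsol. lra. }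
  assert (Htrin : forall n t, x0 - INR n * L <= t -> a <= phin n t <= b) by (intros; apply Hin; lra).
  set (r := fun n : nat => (b - a) * exp (- (k * L / 2) * INR n)).
  assert (Hr : is_lim_seq r 0) by (apply exp_seq_lim; nra).
  assert (Hr0 : forall n, 0 <= r n) by (intros; unfold r; apply Rmult_le_pos; [lra| left; apply exp_pos]).
  assert (Hr' : is_lim_seq (fun n => (2 + Lam) * r n) 0).
  { replace (Finite 0) with (Rbar_mult (2 + Lam) 0) by (simpl; f_equal; ring).
    apply is_lim_seq_scal_l. auto. }
  assert (Hdec : forall x N0 n j, x0 - INR N0 * L <= x - 1 -> forall y, x - 1 <= y ->
             Rabs (phin (n + j + N0)%nat y - phin (n + N0)%nat y) <= r n).
  { intros x N0 n j HN0 y Hy.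
    set (A := x0 - INR (n + N0) * L).
    assert (HA : A <= y).
    { unfold A. rewrite plus_INR. pose proof (pos_INR n). nra. }
    eapply Rle_trans.
    - apply (decay f a b m Hm Hmono (phin (n + j + N0)%nat) (phi1n (n + j + N0)%nat) (phin (n + N0)%nat) (phi1n (n + N0)%nat) A).
      + intros t Ht. apply Htr. unfold A in Ht. rewrite !plus_INR in *. pose proof (pos_INR j). nra.
      + intros t Ht. apply Htr. unfold A in Ht. lra.
      + intros t Ht. apply Htrin. unfold A in Ht. rewrite !plus_INR in *. pose proof (pos_INR j). nra.
      + intros t Ht. apply Htrin. unfold A in Ht. lra.
      + exact HA.
    - unfold r. fold k. apply Rmult_le_compat_l; [lra|]. apply exp_le_mono.
      unfold A. rewrite plus_INR.
      assert (k * (INR n * L) <= k * (y - (x0 - (INR n + INR N0) * L))) by (apply Rmult_le_compat_l; lra).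
      lra. }
  assert (Hdec1 : forall x N0 n j, x0 - INR N0 * L <= x - 1 -> forall y, x - 1 <= y ->
             Rabs (phi1n (n + j + N0)%nat y - phi1n (n + N0)%nat y) <= (2 + Lam) * r n).
  { intros x N0 n j HN0 y Hy.
    set (A := x0 - INR (n + N0) * L).
    assert (HA : A <= y).
    { unfold A. rewrite plus_INR. pose proof (pos_INR n). nra. }
    apply (dbound f a b Lam HfL HLam (phin (n + j + N0)%nat) (phi1n (n + j + N0)%nat) (phin (n + N0)%nat) (phi1n (n + N0)%nat) A).
    + intros t Ht. apply Htr. unfold A in Ht. rewrite !plus_INR in *. pose proof (pos_INR j). nra.
    + intros t Ht. apply Htr. unfold A in Ht. lra.
    + intros t Ht. apply Htrin. unfold A in Ht. rewrite !plus_INR in *. pose proof (pos_INR j). nra.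
    + intros t Ht. apply Htrin. unfold A in Ht. lra.
    + exact HA.
    + intros t Ht. apply (Hdec x N0 n j HN0). lra. }
  assert (HN0 : forall x, exists N0 : nat, x0 - INR N0 * L <= x - 1).
  { intros x. destruct (INR_unbounded ((x0 - x + 1) / L)) as [N HN]. exists N.
    apply Rmult_gt_compat_r with (r := L) in HN; auto.
    unfold Rdiv in HN. rewrite Rmult_assoc, Rinv_l, Rmult_1_r in HN by lra. lra. }
  set (psi := fun y => real (Lim_seq (fun n => phin n y))).
  set (psi1 := fun y => real (Lim_seq (fun n => phi1n n y))).
  assert (Hrate : forall x N0, x0 - INR N0 * L <= x - 1 -> forall y, x - 1 <= y -> forall n,
             Rabs (phin (n + N0)%nat y - psi y) <= r n /\ Rabs (phi1n (n + N0)%nat y - psi1 y) <= (2 + Lam) * r n).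
  { intros x N0 HN y Hy n. unfold psi, psi1.
    rewrite <- (Lim_seq_incr_n (fun n => phin n y) N0), <- (Lim_seq_incr_n (fun n => phi1n n y) N0).
    split.
    - apply (cauchy_rate (fun n => phin (n + N0)%nat y) r Hr). intros n' j. apply (Hdec x); auto.
    - apply (cauchy_rate (fun n => phi1n (n + N0)%nat y) (fun n => (2 + Lam) * r n) Hr'). intros n' j. apply (Hdec1 x); auto. }
  assert (Hpsi_in : forall y, a <= psi y <= b).
  { intros y. destruct (HN0 y) as [N0 HN]. split.
    - assert (- psi y <= - a) by (apply (lim_close _ _ r Hr); intros n;
        destruct (Hrate y N0 HN y ltac:(lra) n) as [H _]; apply Rabs_le_between in H;
        pose proof (Htrin (n + N0)%nat y ltac:(rewrite plus_INR; pose proof (pos_INR n); nra)); lra).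
      lra.
    - apply (lim_close _ _ r Hr); intros n.
      destruct (Hrate y N0 HN y ltac:(lra) n) as [H _]; apply Rabs_le_between in H.
      pose proof (Htrin (n + N0)%nat y ltac:(rewrite plus_INR; pose proof (pos_INR n); nra)). lra. }
  assert (Hpsi_sol : solution f psi psi1).
  { intros x. destruct (HN0 x) as [N0 HN].
    assert (Hdom : forall n y, x - 1 < y < x + 1 -> x0 - INR (n + N0) * L <= y).
    { intros n y Hy. rewrite plus_INR. pose proof (pos_INR n). nra. }
    split.
    - apply (is_derive_ext (fun y => real (Lim_seq (fun n => phin (n + N0)%nat y)))).
      { intros t. unfold psi. rewrite (Lim_seq_incr_n (fun n => phin n t) N0). reflexivity. }
      unfold psi1. rewrite <- (Lim_seq_incr_n (fun n => phi1n n x) N0).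
      apply (lim_deriv (fun n => phin (n + N0)%nat) (fun n => phi1n (n + N0)%nat) x (fun n => (2 + Lam) * r n)); auto.
      + intros n y Hy. apply Htr. auto.
      + intros n y Hy. apply (deriv_cont _ _ _ (proj2 (Htr _ y (Hdom n y Hy)))).
      + intros n y Hy. rewrite (Lim_seq_incr_n (fun n => phin n y) N0). fold (psi y).
        destruct (Hrate x N0 HN y ltac:(lra) n) as [H _]. pose proof (Hr0 n). nra.
      + intros n y Hy. rewrite (Lim_seq_incr_n (fun n => phi1n n y) N0). fold (psi1 y).
        destruct (Hrate x N0 HN y ltac:(lra) n) as [_ H]. auto.
    - apply (is_derive_ext (fun y => real (Lim_seq (fun n => phi1n (n + N0)%nat y)))).
      { intros t. unfold psi1. rewrite (Lim_seq_incr_n (fun n => phi1n n t) N0). reflexivity. }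
      assert (Hlimf : forall y, x - 1 <= y -> Lim_seq (fun n => f y (phin (n + N0)%nat y)) = f y (psi y)).
      { intros y Hy. apply (Lim_seq_rate _ (fun n => Lam * r n)).
        - replace (Finite 0) with (Rbar_mult Lam 0) by (simpl; f_equal; ring). apply is_lim_seq_scal_l. auto.
        - intros n. eapply Rle_trans; [apply HfL; auto|].
          + apply Htrin. rewrite plus_INR. pose proof (pos_INR n). nra.
          + apply Rmult_le_compat_l; auto. apply Hrate with x; auto. }
      replace (f x (psi x)) with (real (Lim_seq (fun n => f x (phin (n + N0)%nat x)))) by (rewrite Hlimf by lra; reflexivity).
      apply (lim_deriv (fun n => phi1n (n + N0)%nat) (fun n y => f y (phin (n + N0)%nat y)) x (fun n => (2 + Lam) * r n)); auto.
      + intros n y Hy. apply Htr. auto.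
      + intros n y Hy. apply (contF_comp f Hfc). apply (deriv_cont _ _ _ (proj1 (Htr _ y (Hdom n y Hy)))).
      + intros n y Hy. rewrite (Lim_seq_incr_n (fun n => phi1n n y) N0). fold (psi1 y).
        destruct (Hrate x N0 HN y ltac:(lra) n) as [_ H]. auto.
      + intros n y Hy. rewrite Hlimf by lra.
        eapply Rle_trans; [apply HfL; [apply Htrin; auto| apply Hpsi_in]|].
        destruct (Hrate x N0 HN y ltac:(lra) n) as [H _].
        pose proof (Hr0 n). pose proof (Rabs_pos (phin (n + N0)%nat y - psi y)). nra. }
  assert (Hpsi_sol' : forall A, forall t, A <= t -> is_derive psi t (psi1 t) /\ is_derive psi1 t (f t (psi t))).
  { intros A t _. apply Hpsi_sol. }
  exists psi, psi1. split; [|split; [auto|split; [|split; auto]]].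
  - intros x. unfold psi. f_equal. rewrite <- (Lim_seq_incr_1 (fun n => phin n x)). apply Lim_seq_ext.
    intros n. unfold phin. rewrite S_INR. f_equal. ring.
  - assert (Hb1 : forall x, x0 <= x -> Rabs (phi x - psi x) <= (b - a) * exp (- k * (x - x0) / 2)).
    { intros x Hx. apply (decay f a b m Hm Hmono phi phi1 psi psi1 x0). all: auto.
      all: intros t Ht; apply Hsol; auto. }
    assert (Hb2 : forall x, x0 <= x -> Rabs (phi1 x - psi1 x) <= (2 + Lam) * ((b - a) * exp (- k * (x - x0) / 2))).
    { intros x Hx. apply (dbound f a b Lam HfL HLam phi phi1 psi psi1 x0). all: auto.
      all: try (intros t Ht; apply Hsol; auto; fail).
      intros t Ht. eapply Rle_trans; [apply Hb1; lra|]. apply Rmult_le_compat_l; [lra|]. apply exp_le_mono.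
        assert (k * (x - x0) <= k * (t - x0)) by (apply Rmult_le_compat_l; lra). lra. }
    apply is_lim_spec. intros eps. simpl.
    destruct (exp_small ((3 + Lam) * ((b - a) * exp (k * x0 / 2))) (k / 2) eps) as [M HM]; [lra| apply cond_pos|].
    exists (Rmax M x0). intros x Hx.
    assert (HxM : M < x) by (eapply Rle_lt_trans; [apply Rmax_l| exact Hx]).
    assert (Hx0 : x0 <= x) by (left; eapply Rle_lt_trans; [apply Rmax_r| exact Hx]).
    specialize (HM x HxM). specialize (Hb1 x Hx0). specialize (Hb2 x Hx0).
    rewrite Rminus_0_r. rewrite Rabs_right by (apply Rle_ge, Rplus_le_le_0_compat; apply Rabs_pos).
    assert (E : exp (- k * (x - x0) / 2) = exp (k * x0 / 2) * exp (- (k / 2) * x)).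
    { rewrite <- exp_plus. f_equal. field. }
    rewrite E in Hb1, Hb2. lra.
  - intros chi chi1 _ Hchi Hchin x.
    apply Rminus_diag_uniq. apply Rabs_eq_0. apply Rle_antisym; [|apply Rabs_pos].
    rewrite <- (Rplus_0_l (Rabs (chi x - psi x))).
    rewrite Rplus_0_l.
    apply (lim_close _ 0 (fun n => (b - a) * exp (- (k / 2) * INR n))).
    + apply exp_seq_lim. lra.
    + intros n. rewrite Rplus_0_l.
      eapply Rle_trans.
      * apply (decay f a b m Hm Hmono chi chi1 psi psi1 (x - INR n)). all: auto.
        all: try (intros; apply Hchi). all: try (pose proof (pos_INR n); lra).
      * fold k. right. f_equal. f_equal. field.
Qed.

Lemma mvt_any (g : R -> R) (y1 y2 : R) :
  (forall t, ex_derive g t) ->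
  exists c, Rmin y1 y2 <= c <= Rmax y1 y2 /\ g y1 - g y2 = Derive g c * (y1 - y2).
Proof.
  intros Hd. destruct (MVT_gen g y2 y1 (Derive g)) as [c [Hc E]].
  - intros x _. apply Derive_correct. auto.
  - intros x _. apply continuity_pt_filterlim. apply (deriv_cont g x (Derive g x)). apply Derive_correct; auto.
  - exists c. split; [|auto]. rewrite Rmin_comm, Rmax_comm. exact Hc.
Qed.

Lemma between_ab a b y1 y2 c : a <= y1 <= b -> a <= y2 <= b -> Rmin y1 y2 <= c <= Rmax y1 y2 -> a <= c <= b.
Proof. intros H1 H2 H3. unfold Rmin, Rmax in H3. destruct (Rle_dec y1 y2); lra. Qed.

Theorem theorem2 (L : R) (f : R -> R -> R) (x0 : R)
  (alpha beta alpha1 alpha2 beta1 beta2 : R -> R)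
  (HL : 0 < L)
  (Hfc : forall p : R * R, continuous (fun q : R * R => f (fst q) (snd q)) p)
  (Hfper : forall x y, f (x + L) y = f x y)
  (Hfd : forall x y, ex_derive (f x) y)
  (Hfdc : forall p : R * R,
      continuous (fun q : R * R => Derive (f (fst q)) (snd q)) p)
  (Hab : bounded_from x0 alpha) (Hbb : bounded_from x0 beta)
  (Had : twice_diff_from x0 alpha alpha1 alpha2)
  (Hbd : twice_diff_from x0 beta beta1 beta2)
  (H1 : forall x, x0 < x -> alpha x < beta x)
  (H2a : forall x, x0 < x -> alpha2 x > f x (alpha x))
  (H2b : forall x, x0 < x -> beta2 x < f x (beta x)) :
  exists phi phi1 : R -> R,
    solution_from f x0 phi phi1 /\
    (forall x, x0 < x -> alpha x < phi x < beta x) /\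
    ((exists m, 0 < m /\
        (exists x y, 0 <= x <= L /\
           inf_from x0 alpha <= y <= sup_from x0 beta /\
           Derive (f x) y = m) /\
        (forall x y, 0 <= x <= L ->
           inf_from x0 alpha <= y <= sup_from x0 beta ->
           m <= Derive (f x) y)) ->
     exists psi psi1 : R -> R,
       periodic L psi /\ solution f psi psi1 /\
       is_lim (fun x => Rabs (phi x - psi x) + Rabs (phi1 x - psi1 x))
              p_infty 0 /\
       (forall x, inf_from x0 alpha <= psi x <= sup_from x0 beta) /\
       (forall chi chi1 : R -> R,
          periodic L chi -> solution f chi chi1 ->
          (forall x, inf_from x0 alpha <= chi x <= sup_from x0 beta) ->
          forall x, chi x = psi x)).
Proof.
  assert (Ha := inf_le x0 alpha Hab). assert (Hb := sup_ge x0 beta Hbb).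
  destruct (bound2d f Hfc 0 L (inf_from x0 alpha) (sup_from x0 beta)) as [K0 HK0].
  destruct (bound2d (fun x y => Derive (f x) y) Hfdc 0 L (inf_from x0 alpha) (sup_from x0 beta)) as [D0 HD0].
  set (Lam := Rmax 0 D0).
  assert (HLam : 0 <= Lam) by apply Rmax_l.
  assert (HfK : forall x y, inf_from x0 alpha <= y <= sup_from x0 beta -> Rabs (f x y) <= K0).
  { intros x y Hy. destruct (per_reduce f L HL Hfper x) as [x' [Hx' Hf]]. rewrite Hf. apply HK0; auto. }
  assert (HfD : forall x y, inf_from x0 alpha <= y <= sup_from x0 beta -> Rabs (Derive (f x) y) <= Lam).
  { intros x y Hy. destruct (per_reduce f L HL Hfper x) as [x' [Hx' Hf]].
    rewrite (Derive_ext (f x) (f x') y Hf). eapply Rle_trans; [apply (HD0 x' y); auto| apply Rmax_r]. }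
  assert (HfL : forall x y1 y2, inf_from x0 alpha <= y1 <= sup_from x0 beta -> inf_from x0 alpha <= y2 <= sup_from x0 beta ->
             Rabs (f x y1 - f x y2) <= Lam * Rabs (y1 - y2)).
  { intros x y1 y2 Hy1 Hy2. destruct (mvt_any (f x) y1 y2 (Hfd x)) as [c [Hc E]].
    rewrite E, Rabs_mult. apply Rmult_le_compat_r; [apply Rabs_pos|]. apply HfD.
    apply (between_ab _ _ y1 y2 c Hy1 Hy2 Hc). }
  destruct (part1 f x0 alpha beta alpha1 alpha2 beta1 beta2 (inf_from x0 alpha) (sup_from x0 beta) K0 Lam
              Hfc HfK HfL HLam Had Hbd H1 H2a H2b Ha Hb) as [phi [phi1 [Hsol [Hstrict [Hphi0 Hab0]]]]].
  exists phi, phi1. split; [exact Hsol|]. split; [exact Hstrict|].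
  intros [m [Hm [_ Hmin]]].
  assert (Hmono : forall t y1 y2, inf_from x0 alpha <= y1 <= sup_from x0 beta -> inf_from x0 alpha <= y2 <= sup_from x0 beta ->
             m * (y1 - y2)^2 <= (f t y1 - f t y2) * (y1 - y2)).
  { intros t y1 y2 Hy1 Hy2. destruct (per_reduce f L HL Hfper t) as [t' [Ht' Hf]].
    rewrite !Hf. destruct (mvt_any (f t') y1 y2 (Hfd t')) as [c [Hc E]]. rewrite E.
    assert (m <= Derive (f t') c) by (apply Hmin; auto; apply (between_ab _ _ y1 y2 c Hy1 Hy2 Hc)).
    pose proof (pow2_ge_0 (y1 - y2)). simpl in *. nra. }
  apply (part2 f L x0 (inf_from x0 alpha) (sup_from x0 beta) Lam m HL Hfc Hfper HfL HLam Hm Hmono phi phi1 Hsol).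
  intros x Hx. destruct (Rle_lt_or_eq_dec _ _ Hx) as [Hlt|<-].
  - specialize (Hstrict x Hlt). specialize (Ha x Hx). specialize (Hb x Hx). lra.
  - rewrite Hphi0. specialize (Ha x0 Hx). specialize (Hb x0 Hx). lra.
Qed.
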